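(* Let $(C,\xi):(\Delta,+,0)\to(\mathbf{Cat},\times,\mathbf{1})$ be a homotopy monoid in $\mathbf{Cat}$ (a homotopy monoidal category). Then the category $C(1)$ can be given the structure of a (not necessarily strict) monoidal category.
   Context: $\mathbf{Cat}$ is the category of small categories and functors, with cartesian product $\times$, terminal category $\mathbf{1}$, and equivalences of categories as its equivalences. $\Delta$: objects $n=\{0,\dots,n-1\}$ ($n\ge0$), order-preserving maps, monoidal under ordinal sum $+$ with unit $0$. A homotopy monoid in $\mathbf{Cat}$ is a colax monoidal functor $(C,\xi):(\Delta,+,0)\to(\mathbf{Cat},\times,\mathbf{1})$ — a functor $C$ together with functors $\xi_{m,n}:C(m+n)\to C(m)\times C(n)$, natural in $m,n$, and $\xi_0:C(0)\to\mathbf{1}$, satisfying the coassociativity and counit axioms of a monoidal functor (not required to be invertible) — such that each $\xi_{m,n}$ and $\xi_0$ is an equivalence of categories. *)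

(* Defs.v *)
From Stdlib Require Import JMeq.
From HB Require Import structures.
From mathcomp Require Import all_boot zify.

Set Implicit Arguments.
Unset Strict Implicit.
Unset Printing Implicit Defensive.

Record Category := {
  ob : Type;
  hom : ob -> ob -> Type;
  idm : forall a, hom a a;
  cmp : forall a b c, hom b c -> hom a b -> hom a c;
  cmp_id_l : forall a b (f : hom a b), cmp (idm b) f = f;
  cmp_id_r : forall a b (f : hom a b), cmp f (idm a) = f;
  cmp_assoc : forall a b c d (h : hom c d) (g : hom b c) (f : hom a b),
      cmp h (cmp g f) = cmp (cmp h g) f }.
Coercion ob : Category >-> Sortclass.
Arguments hom {c} _ _ : rename.
Arguments idm {c} _ : rename.
Arguments cmp {c a b c0} _ _ : rename.

Record Functor (A B : Category) := {
  fob : A -> B;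
  fmap : forall a b, hom a b -> hom (fob a) (fob b);
  fmap_id : forall a, fmap (idm a) = idm (fob a);
  fmap_cmp : forall a b c (g : hom b c) (f : hom a b),
      fmap (cmp g f) = cmp (fmap g) (fmap f) }.
Coercion fob : Functor >-> Funclass.
Arguments fmap {A B} F {a b} f : rename.

Definition Feq (A B : Category) (F G : Functor A B) : Prop :=
  (forall a, F a = G a) /\
  (forall a b (f : hom a b), JMeq (fmap F f) (fmap G f)).

Definition FId (A : Category) : Functor A A.
Proof.
refine {| fob := fun a => a; fmap := fun a b f => f |}.
- by [].
- by [].
Defined.

Definition FComp (A B D : Category) (G : Functor B D) (F : Functor A B)
  : Functor A D.
Proof.
refine {| fob := fun a => G (F a); fmap := fun a b f => fmap G (fmap F f) |}.
- by move=> a; rewrite !fmap_id.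
- by move=> a b c g f; rewrite !fmap_cmp.
Defined.

Record NatTrans (A B : Category) (F G : Functor A B) := {
  ntc : forall a, hom (F a) (G a);
  ntc_natural : forall a b (f : hom a b),
      cmp (fmap G f) (ntc a) = cmp (ntc b) (fmap F f) }.
Arguments ntc {A B F G} n a : rename.

Definition is_iso (D : Category) (a b : D) (f : hom a b) : Prop :=
  exists g : hom b a, cmp g f = idm a /\ cmp f g = idm b.

Definition is_natiso (A B : Category) (F G : Functor A B)
  (n : NatTrans F G) : Prop := forall a, is_iso (ntc n a).

Definition is_equivalence (A B : Category) (F : Functor A B) : Prop :=
  exists (G : Functor B A) (u : NatTrans (FId A) (FComp G F))
         (c : NatTrans (FComp F G) (FId B)),
    is_natiso u /\ is_natiso c.

Definition TermCat : Category.
Proof.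
refine {| ob := unit; hom := fun _ _ => unit;
          idm := fun _ => tt; cmp := fun _ _ _ _ _ => tt |}.
- by move=> a b [].
- by move=> a b [].
- by [].
Defined.

Definition ToTerm (A : Category) : Functor A TermCat.
Proof.
refine {| fob := fun _ => (tt : TermCat); fmap := fun _ _ _ => (tt : hom (tt : TermCat) tt) |}.
- by [].
- by [].
Defined.

Definition ProdCat (A B : Category) : Category.
Proof.
refine {| ob := (A * B)%type;
          hom := fun x y : (A * B)%type => (hom x.1 y.1 * hom x.2 y.2)%type;
          idm := fun x : (A * B)%type => (idm x.1, idm x.2);
          cmp := fun (x y z : (A * B)%type) (g : (hom y.1 z.1 * hom y.2 z.2)%type)
                     (f : (hom x.1 y.1 * hom x.2 y.2)%type) =>
                   (cmp g.1 f.1, cmp g.2 f.2) |}.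
- by move=> a b [f1 f2] /=; rewrite !cmp_id_l.
- by move=> a b [f1 f2] /=; rewrite !cmp_id_r.
- by move=> a b c d [h1 h2] [g1 g2] [f1 f2] /=; rewrite !cmp_assoc.
Defined.

Definition FPair (A B D : Category) (F : Functor A B) (G : Functor A D)
  : Functor A (ProdCat B D).
Proof.
refine {| fob := fun a => ((F a, G a) : ProdCat B D);
          fmap := fun a b f =>
            ((fmap F f, fmap G f) : @hom (ProdCat B D) (F a, G a) (F b, G b)) |}.
- by move=> a /=; rewrite !fmap_id.
- by move=> a b c g f /=; rewrite !fmap_cmp.
Defined.

Definition FProd (A A' B B' : Category) (F : Functor A B) (G : Functor A' B')
  : Functor (ProdCat A A') (ProdCat B B').
Proof.
refine {| fob := fun x : ProdCat A A' => ((F x.1, G x.2) : ProdCat B B');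
          fmap := fun (x y : ProdCat A A') (f : @hom (ProdCat A A') x y) =>
            ((fmap F f.1, fmap G f.2)
               : @hom (ProdCat B B') (F x.1, G x.2) (F y.1, G y.2)) |}.
- by move=> a /=; rewrite !fmap_id.
- by move=> a b c g f /=; rewrite !fmap_cmp.
Defined.

Definition FAssocR (A B D : Category)
  : Functor (ProdCat (ProdCat A B) D) (ProdCat A (ProdCat B D)).
Proof.
refine {| fob := fun x : ProdCat (ProdCat A B) D => ((x.1.1, (x.1.2, x.2)) : ProdCat A (ProdCat B D));
          fmap := fun (x y : ProdCat (ProdCat A B) D) (f : @hom (ProdCat (ProdCat A B) D) x y) =>
            ((f.1.1, (f.1.2, f.2))
              : @hom (ProdCat A (ProdCat B D)) (x.1.1, (x.1.2, x.2))
                                               (y.1.1, (y.1.2, y.2))) |}.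
- by [].
- by [].
Defined.

Definition FAssocL (A B D : Category)
  : Functor (ProdCat A (ProdCat B D)) (ProdCat (ProdCat A B) D).
Proof.
refine {| fob := fun x : ProdCat A (ProdCat B D) => (((x.1, x.2.1), x.2.2) : ProdCat (ProdCat A B) D);
          fmap := fun (x y : ProdCat A (ProdCat B D)) (f : @hom (ProdCat A (ProdCat B D)) x y) =>
            (((f.1, f.2.1), f.2.2)
              : @hom (ProdCat (ProdCat A B) D) ((x.1, x.2.1), x.2.2)
                                               ((y.1, y.2.1), y.2.2)) |}.
- by [].
- by [].
Defined.

Definition FConst (A B : Category) (b : B) : Functor A B.
Proof.
refine {| fob := fun _ => b; fmap := fun _ _ _ => idm b |}.
- by [].
- by move=> *; rewrite cmp_id_l.
Defined.

Section MonoidalHelpers.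
Variables (D : Category) (T : Functor (ProdCat D D) D).

Definition tens (a b : D) : D := T ((a, b) : ProdCat D D).
Definition tensm (a a' b b' : D) (f : hom a a') (g : hom b b')
  : hom (tens a b) (tens a' b') :=
  fmap T ((f, g) : @hom (ProdCat D D) (a, b) (a', b')).

Definition AssocSrc := FComp T (FProd T (FId D)).
Definition AssocTgt := FComp T (FComp (FProd (FId D) T) (@FAssocR D D D)).
Definition LUnitSrc (i : D) := FComp T (FPair (FConst D i) (FId D)).
Definition RUnitSrc (i : D) := FComp T (FPair (FId D) (FConst D i)).

Definition assoc_at (al : NatTrans AssocSrc AssocTgt) (a b c : D)
  : hom (tens (tens a b) c) (tens a (tens b c)) :=
  ntc al ((((a, b) : ProdCat D D), c) : ProdCat (ProdCat D D) D).
Definition lunit_at (i : D) (l : NatTrans (LUnitSrc i) (FId D)) (a : D)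
  : hom (tens i a) a := ntc l a.
Definition runit_at (i : D) (r : NatTrans (RUnitSrc i) (FId D)) (a : D)
  : hom (tens a i) a := ntc r a.
End MonoidalHelpers.

Record MonoidalStructure (D : Category) := {
  tensor : Functor (ProdCat D D) D;
  munit : D;
  (* associator  (x (x) y) (x) z  ->  x (x) (y (x) z) *)
  assoc : NatTrans (AssocSrc tensor) (AssocTgt tensor);
  lunit : NatTrans (LUnitSrc tensor munit) (FId D);
  runit : NatTrans (RUnitSrc tensor munit) (FId D);
  assoc_iso : is_natiso assoc;
  lunit_iso : is_natiso lunit;
  runit_iso : is_natiso runit;
  pentagon : forall w x y z : D,
    cmp (assoc_at assoc w x (tens tensor y z))
        (assoc_at assoc (tens tensor w x) y z)
    = cmp (tensm tensor (idm w) (assoc_at assoc x y z))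
       (cmp (assoc_at assoc w (tens tensor x y) z)
            (tensm tensor (assoc_at assoc w x y) (idm z)));
  triangle : forall x y : D,
    cmp (tensm tensor (idm x) (lunit_at lunit y)) (assoc_at assoc x munit y)
    = tensm tensor (runit_at runit x) (idm y) }.

(** * The simplex category Delta (objects n = {0,...,n-1}, n >= 0,
      order-preserving maps), monoidal under ordinal sum. *)

Definition monob (m n : nat) (f : {ffun 'I_m -> 'I_n}) : bool :=
  [forall i : 'I_m, forall j : 'I_m, (i <= j) ==> (f i <= f j)].

Definition DHom (m n : nat) := {f : {ffun 'I_m -> 'I_n} | monob f}.

Lemma monobP (m n : nat) (f : {ffun 'I_m -> 'I_n}) :
  reflect (forall i j : 'I_m, i <= j -> f i <= f j) (monob f).
Proof.
apply: (iffP forallP) => H.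
- by move=> i j le; move/forallP: (H i) => /(_ j) /implyP; apply.
- by move=> i; apply/forallP => j; apply/implyP; apply: H.
Qed.

Definition did (n : nat) : DHom n n.
Proof.
exists [ffun i => i]; apply/monobP => i j; by rewrite !ffunE.
Defined.

Definition dcomp (m n p : nat) (g : DHom n p) (f : DHom m n) : DHom m p.
Proof.
exists [ffun i => sval g (sval f i)]; apply/monobP => i j le; rewrite !ffunE.
by apply/(monobP _ (svalP g))/(monobP _ (svalP f)).
Defined.

Lemma dhom_eq (m n : nat) (f g : DHom m n) : (forall i, sval f i = sval g i) -> f = g.
Proof. by move=> H; apply: val_inj; apply/ffunP. Qed.

Definition Delta : Category.
Proof.
refine {| ob := nat; hom := DHom; idm := did; cmp := dcomp |}.
- by move=> a b f; apply: dhom_eq => i /=; rewrite !ffunE.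
- by move=> a b f; apply: dhom_eq => i /=; rewrite !ffunE.
- by move=> a b c d h g f; apply: dhom_eq => i /=; rewrite !ffunE.
Defined.

Definition dplus_fun (m m' n n' : nat) (f : DHom m n) (g : DHom m' n')
  (i : 'I_(m + m')) : 'I_(n + n') :=
  match split i with
  | inl a => lshift n' (sval f a)
  | inr b => rshift n (sval g b)
  end.

Lemma dplus_mono (m m' n n' : nat) (f : DHom m n) (g : DHom m' n') :
  monob [ffun i => dplus_fun f g i].
Proof.
apply/monobP => i j le; rewrite !ffunE /dplus_fun.
case: splitP => [a Ha|b Hb]; case: splitP => [a' Ha'|b' Hb'] /=.
- by apply/(monobP _ (svalP f)); rewrite -Ha -Ha'.
- by apply: leq_trans (ltnW (ltn_ord _)) (leq_addr _ _).
- by exfalso; move: le; rewrite Hb Ha'; have := ltn_ord a'; lia.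
- rewrite leq_add2l; apply/(monobP _ (svalP g)).
  by move: le; rewrite Hb Hb' leq_add2l.
Qed.

Definition dplus (m m' n n' : nat) (f : DHom m n) (g : DHom m' n')
  : DHom (m + m') (n + n') := exist (fun h => is_true (monob h)) _ (dplus_mono f g).

Definition dcast (m n : nat) (e : m = n) : DHom m n.
Proof.
exists [ffun i => cast_ord e i]; apply/monobP => i j; by rewrite !ffunE.
Defined.

Definition dassoc (m n p : nat) : DHom (m + n + p) (m + (n + p)) :=
  dcast (esym (addnA m n p)).
Definition dlunit (n : nat) : DHom (0 + n) n := dcast (add0n n).
Definition drunit (n : nat) : DHom (n + 0) n := dcast (addn0 n).

(** A colax monoidal functor (C, xi) : (Delta, +, 0) -> (Cat, x, 1):
  a functor C : Delta -> Cat with functors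
  xi_{m,n} : C(m+n) -> C(m) x C(n) natural in m, n and xi_0 : C(0) -> 1,
  satisfying coassociativity and counitality (equalities of functors, i.e.
  equalities in the 1-category Cat), such that every xi_{m,n} and xi_0 is an
  equivalence of categories. *)

Record HomotopyMonoid := {
  HC : nat -> Category;
  HCmap : forall m n : nat, DHom m n -> Functor (HC m) (HC n);
  HCmap_id : forall n, Feq (HCmap (did n)) (FId (HC n));
  HCmap_comp : forall m n p (g : DHom n p) (f : DHom m n),
      Feq (HCmap (dcomp g f)) (FComp (HCmap g) (HCmap f));
  xi : forall m n : nat, Functor (HC (m + n)) (ProdCat (HC m) (HC n));
  xi0 : Functor (HC 0) TermCat;
  xi_natural : forall m m' n n' (f : DHom m m') (g : DHom n n'),
      Feq (FComp (FProd (HCmap f) (HCmap g)) (xi m n))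
          (FComp (xi m' n') (HCmap (dplus f g)));
  xi_coassoc : forall m n p,
      Feq (FComp (FProd (xi m n) (FId (HC p))) (xi (m + n) p))
          (FComp (@FAssocL (HC m) (HC n) (HC p))
            (FComp (FProd (FId (HC m)) (xi n p))
              (FComp (xi m (n + p)) (HCmap (dassoc m n p)))));
  xi_counit_l : forall n,
      Feq (FComp (FProd xi0 (FId (HC n))) (xi 0 n))
          (FComp (FPair (ToTerm (HC n)) (FId (HC n))) (HCmap (dlunit n)));
  xi_counit_r : forall n,
      Feq (FComp (FProd (FId (HC n)) xi0) (xi n 0))
          (FComp (FPair (FId (HC n)) (ToTerm (HC n))) (HCmap (drunit n)));
  xi_equiv : forall m n, is_equivalence (xi m n);
  xi0_equiv : is_equivalence xi0 }.

(* Main.v *)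
From Stdlib Require Import JMeq ProofIrrelevance IndefiniteDescription.
From HB Require Import structures.
From mathcomp Require Import all_boot zify.
Require Import Defs.

Set Implicit Arguments.
Unset Strict Implicit.
Unset Printing Implicit Defensive.


Definition idc (D : Category) (a b : D) (e : a = b) : hom a b :=
  match e in _ = y return hom a y with erefl => idm a end.

Definition hEq (D : Category) (a b a' b' : D) (f : hom a b) (g : hom a' b') : Prop :=
  exists (ea : a = a') (eb : b = b'), cmp (idc eb) f = cmp g (idc ea).

Lemma UIPr (T : Type) (x : T) (e : x = x) : e = erefl.
Proof. exact: proof_irrelevance. Qed.

Lemma hEq_refl (D : Category) (a b : D) (f : hom a b) : hEq f f.
Proof. exists erefl, erefl => /=; by rewrite cmp_id_l cmp_id_r. Qed.

Lemma hEqE (D : Category) (a b : D) (f g : hom a b) : hEq f g -> f = g.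
Proof.
case=> ea [eb]; rewrite (UIPr ea) (UIPr eb) /= cmp_id_l cmp_id_r //.
Qed.

Lemma eq_hEq (D : Category) (a b : D) (f g : hom a b) : f = g -> hEq f g.
Proof. by move->; apply: hEq_refl. Qed.

Lemma hEq_sym (D : Category) (a b a' b' : D) (f : hom a b) (g : hom a' b') :
  hEq f g -> hEq g f.
Proof.
case=> ea [eb]; destruct ea, eb => /=; rewrite cmp_id_l cmp_id_r => ->; apply: hEq_refl.
Qed.

Lemma hEq_trans (D : Category) (a b a' b' a'' b'' : D) (f : hom a b) (g : hom a' b')
  (h : hom a'' b'') : hEq f g -> hEq g h -> hEq f h.
Proof.
case=> ea [eb]; destruct ea, eb => /=; rewrite cmp_id_l cmp_id_r => ->.
case=> ea [eb]; destruct ea, eb => /=; rewrite cmp_id_l cmp_id_r => ->; apply: hEq_refl.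
Qed.

Lemma hEq_cmp (D : Category) (a b c a' b' c' : D) (f : hom a b) (g : hom b c)
  (f' : hom a' b') (g' : hom b' c') :
  hEq f f' -> hEq g g' -> hEq (cmp g f) (cmp g' f').
Proof.
case=> ea [eb]; destruct ea, eb => /= E1.
case=> eb [ec]; rewrite (UIPr eb); destruct ec => /= E2.
apply: eq_hEq; move: E1 E2; rewrite !cmp_id_l !cmp_id_r => -> -> //.
Qed.

Lemma hEq_idc (D : Category) (a b : D) (e : a = b) : hEq (idc e) (idm a).
Proof. destruct e; apply: hEq_refl. Qed.

Lemma hEq_idc2 (D : Category) (a b c : D) (e : a = b) (e' : a = c) : hEq (idc e) (idc e').
Proof. apply: hEq_trans (hEq_idc e) (hEq_sym (hEq_idc e')). Qed.

Lemma hEq_idm (D : Category) (a a' : D) : a = a' -> hEq (idm a) (idm a').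
Proof. by move->; apply: hEq_refl. Qed.

Lemma hEq_cmp_idcl (D : Category) (a b c : D) (e : b = c) (f : hom a b) :
  hEq (cmp (idc e) f) f.
Proof. destruct e => /=; rewrite cmp_id_l; apply: hEq_refl. Qed.

Lemma hEq_cmp_idcr (D : Category) (a b c : D) (e : a = b) (f : hom b c) :
  hEq (cmp f (idc e)) f.
Proof. destruct e => /=; rewrite cmp_id_r; apply: hEq_refl. Qed.

Lemma hEq_fmap (A B : Category) (F : Functor A B) (a b a' b' : A) (f : hom a b)
  (g : hom a' b') : hEq f g -> hEq (fmap F f) (fmap F g).
Proof. case=> ea [eb]; destruct ea, eb => /=; rewrite cmp_id_l cmp_id_r => ->; apply: hEq_refl. Qed.

Lemma JMeq_hEq (D : Category) (x y x' y' : D) (f : hom x y) (g : hom x' y') :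
  x = x' -> y = y' -> JMeq f g -> hEq f g.
Proof. move=> ex ey; destruct ex, ey => J; rewrite (JMeq_eq J); apply: hEq_refl. Qed.

Lemma Feq_ob (A B : Category) (F G : Functor A B) : Feq F G -> forall a, F a = G a.
Proof. by case. Qed.

Lemma Feq_hEq (A B : Category) (F G : Functor A B) : Feq F G ->
  forall a b (f : hom a b), hEq (fmap F f) (fmap G f).
Proof. case=> Eo Em a b f; apply: JMeq_hEq; [apply: Eo|apply: Eo|apply: Em]. Qed.

Definition pm (A B : Category) (a1 b1 : A) (a2 b2 : B) (f1 : hom a1 b1) (f2 : hom a2 b2)
  : @hom (ProdCat A B) (a1, a2) (b1, b2) := (f1, f2).

Lemma hEq_pm (A B : Category) (a1 b1 a1' b1' : A) (a2 b2 a2' b2' : B)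
  (f1 : hom a1 b1) (f2 : hom a2 b2) (g1 : hom a1' b1') (g2 : hom a2' b2') :
  hEq f1 g1 -> hEq f2 g2 -> hEq (pm f1 f2) (pm g1 g2).
Proof.
case=> ea [eb]; destruct ea, eb => /=; rewrite cmp_id_l cmp_id_r => ->.
case=> ea [eb]; destruct ea, eb => /=; rewrite cmp_id_l cmp_id_r => ->.
apply: hEq_refl.
Qed.

Lemma hEq_fst (A B : Category) (x y x' y' : ProdCat A B) (f : hom x y) (g : hom x' y') :
  hEq f g -> hEq (f.1 : hom x.1 y.1) (g.1 : hom x'.1 y'.1).
Proof. case=> ea [eb]; destruct ea, eb; rewrite cmp_id_l cmp_id_r => ->; apply: hEq_refl. Qed.

Lemma hEq_snd (A B : Category) (x y x' y' : ProdCat A B) (f : hom x y) (g : hom x' y') :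
  hEq f g -> hEq (f.2 : hom x.2 y.2) (g.2 : hom x'.2 y'.2).
Proof. case=> ea [eb]; destruct ea, eb; rewrite cmp_id_l cmp_id_r => ->; apply: hEq_refl. Qed.

Lemma hEq_pair (A B : Category) (x y x' y' : ProdCat A B) (f : hom x y) (g : hom x' y') :
  hEq (f.1 : hom x.1 y.1) (g.1 : hom x'.1 y'.1) ->
  hEq (f.2 : hom x.2 y.2) (g.2 : hom x'.2 y'.2) -> hEq f g.
Proof.
case: x y x' y' f g => [x1 x2] [y1 y2] [x1' x2'] [y1' y2'] [f1 f2] [g1 g2] /= H1 H2.
exact: (hEq_pm H1 H2).
Qed.

Definition inv (D : Category) (a b : D) (f : hom a b) (H : is_iso f) : hom b a :=
  proj1_sig (constructive_indefinite_description _ H).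

Lemma invl (D : Category) (a b : D) (f : hom a b) (H : is_iso f) : cmp (inv H) f = idm a.
Proof. rewrite /inv; case: constructive_indefinite_description => g [] //. Qed.
Lemma invr (D : Category) (a b : D) (f : hom a b) (H : is_iso f) : cmp f (inv H) = idm b.
Proof. rewrite /inv; case: constructive_indefinite_description => g [] //. Qed.

Lemma inv_uniq (D : Category) (a b : D) (f : hom a b) (H : is_iso f) (g : hom b a) :
  cmp g f = idm a -> inv H = g.
Proof.
move=> E; rewrite -[inv H]cmp_id_l -E -cmp_assoc invr cmp_id_r //.
Qed.

Lemma hEq_inv (D : Category) (a b a' b' : D) (f : hom a b) (g : hom a' b')
  (Hf : is_iso f) (Hg : is_iso g) : hEq f g -> hEq (inv Hf) (inv Hg).
Proof.
case=> ea [eb]; destruct ea, eb => /=; rewrite cmp_id_l cmp_id_r => E; destruct E.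
apply: eq_hEq; apply: inv_uniq; apply: invl.
Qed.

Lemma iso_cmp (D : Category) (a b c : D) (f : hom a b) (g : hom b c) :
  is_iso f -> is_iso g -> is_iso (cmp g f).
Proof.
case=> f' [f1 f2] [g' [g1 g2]]; exists (cmp f' g'); split.
- by rewrite cmp_assoc -(cmp_assoc f') g1 cmp_id_r f1.
- by rewrite cmp_assoc -(cmp_assoc g) f2 cmp_id_r g2.
Qed.

Lemma iso_idm (D : Category) (a : D) : is_iso (idm a).
Proof. exists (idm a); by rewrite cmp_id_l. Qed.

Lemma iso_idc (D : Category) (a b : D) (e : a = b) : is_iso (idc e).
Proof. destruct e; exact: iso_idm. Qed.

Lemma iso_fmap (A B : Category) (F : Functor A B) (a b : A) (f : hom a b) :
  is_iso f -> is_iso (fmap F f).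
Proof.
case=> g [g1 g2]; exists (fmap F g); by rewrite -!fmap_cmp g1 g2 !fmap_id.
Qed.

Lemma iso_inv (D : Category) (a b : D) (f : hom a b) (H : is_iso f) : is_iso (inv H).
Proof. exists f; by rewrite invl invr. Qed.

Lemma iso_pm (A B : Category) (a1 b1 : A) (a2 b2 : B) (f1 : hom a1 b1) (f2 : hom a2 b2) :
  is_iso f1 -> is_iso f2 -> is_iso (pm f1 f2).
Proof.
case=> g1 [h1 h1'] [g2 [h2 h2']]; exists (pm g1 g2) => /=.
by rewrite /pm /= h1 h1' h2 h2'.
Qed.

Lemma iso_fst (A B : Category) (x y : ProdCat A B) (f : hom x y) :
  is_iso f -> is_iso (f.1 : hom x.1 y.1).
Proof. case=> g [h1 h2]; exists g.1; split; [exact: (f_equal fst h1)|exact: (f_equal fst h2)]. Qed.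
Lemma iso_snd (A B : Category) (x y : ProdCat A B) (f : hom x y) :
  is_iso f -> is_iso (f.2 : hom x.2 y.2).
Proof. case=> g [h1 h2]; exists g.2; split; [exact: (f_equal snd h1)|exact: (f_equal snd h2)]. Qed.

Record EqvData (A B : Category) (F : Functor A B) := {
  eG : Functor B A;
  eu : NatTrans (FId A) (FComp eG F);
  ec : NatTrans (FComp F eG) (FId B);
  eu_iso : is_natiso eu;
  ec_iso : is_natiso ec }.

Lemma eqv_data (A B : Category) (F : Functor A B) : is_equivalence F -> inhabited (EqvData F).
Proof. case=> G [u [c [Hu Hc]]]; constructor; exact: (Build_EqvData Hu Hc). Qed.

Section FF.
Variables (A B : Category) (F : Functor A B) (E : EqvData F).

Definition lift0 (x y : A) (g : hom (F x) (F y)) : hom x y :=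
  cmp (inv (eu_iso E y)) (cmp (fmap (eG E) g) (ntc (eu E) x)).

Lemma ff_faithful (x y : A) (f f' : hom x y) : fmap F f = fmap F f' -> f = f'.
Proof.
move=> Ef.
have N := ntc_natural (eu E).
have K g : g = cmp (inv (eu_iso E y)) (cmp (fmap (eG E) (fmap F g)) (ntc (eu E) x)).
  have := N _ _ g; rewrite /= => ->.
  by rewrite cmp_assoc invl cmp_id_l.
by rewrite (K f) (K f') Ef.
Qed.

Lemma G_faithful (a b : B) (g g' : hom a b) : fmap (eG E) g = fmap (eG E) g' -> g = g'.
Proof.
move=> Eg.
have N := ntc_natural (ec E).
have K h : h = cmp (cmp (ntc (ec E) b) (fmap F (fmap (eG E) h))) (inv (ec_iso E a)).
  have := N _ _ h; rewrite /= => <-.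
  by rewrite -cmp_assoc invr cmp_id_r.
by rewrite (K g) (K g') Eg.
Qed.

Lemma lift0_K (x y : A) (g : hom (F x) (F y)) : fmap F (lift0 g) = g.
Proof.
apply: G_faithful.
have N := ntc_natural (eu E) (lift0 g); rewrite /= in N.
have : cmp (fmap (eG E) (fmap F (lift0 g))) (ntc (eu E) x) = cmp (fmap (eG E) g) (ntc (eu E) x).
  by rewrite N /lift0 !cmp_assoc invr cmp_id_l.
move/(f_equal (fun h => cmp h (inv (eu_iso E x)))).
by rewrite -!cmp_assoc !invr !cmp_id_r.
Qed.

Lemma lift_ex : { l : forall x y : A, hom (F x) (F y) -> hom x y |
  forall x y g, fmap F (l x y g) = g }.
Proof. exists lift0; exact: lift0_K. Qed.
Definition lift (x y : A) (g : hom (F x) (F y)) : hom x y := proj1_sig lift_ex x y g.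
Lemma lift_K (x y : A) (g : hom (F x) (F y)) : fmap F (lift g) = g.
Proof. exact: (proj2_sig lift_ex). Qed.

Lemma lift_F (x y : A) (f : hom x y) : lift (fmap F f) = f.
Proof. apply: ff_faithful; exact: lift_K. Qed.

Lemma lift_cmp (x y z : A) (g : hom (F y) (F z)) (h : hom (F x) (F y)) :
  lift (cmp g h) = cmp (lift g) (lift h).
Proof. apply: ff_faithful; by rewrite fmap_cmp !lift_K. Qed.

Lemma lift_id (x : A) : lift (idm (F x)) = idm x.
Proof. apply: ff_faithful; by rewrite fmap_id lift_K. Qed.

Lemma iso_lift (x y : A) (g : hom (F x) (F y)) : is_iso g -> is_iso (lift g).
Proof.
case=> g' [h1 h2]; exists (lift g'); by rewrite -!lift_cmp h1 h2 !lift_id.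
Qed.

Lemma ff_hEq (x y x' y' : A) (f : hom x y) (f' : hom x' y') :
  x = x' -> y = y' -> hEq (fmap F f) (fmap F f') -> hEq f f'.
Proof.
move=> ex ey; destruct ex, ey => /hEqE E1; apply: eq_hEq; exact: ff_faithful.
Qed.

Lemma hEq_lift (x y : A) (g : hom (F x) (F y)) (x' y' : A) (g' : hom (F x') (F y')) :
  x = x' -> y = y' -> hEq g g' -> hEq (lift g) (lift g').
Proof.
move=> ex ey; destruct ex, ey => /hEqE ->; apply: hEq_refl.
Qed.

Definition cnt (b : B) : hom (F (eG E b)) b := ntc (ec E) b.
Definition cnti (b : B) : hom b (F (eG E b)) := inv (ec_iso E b).
Lemma cnt_iso b : is_iso (cnt b). Proof. exact: ec_iso. Qed.
Lemma cnti_iso b : is_iso (cnti b). Proof. exact: iso_inv. Qed.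
Lemma cnt_cnti b : cmp (cnt b) (cnti b) = idm b. Proof. exact: invr. Qed.
Lemma cnti_cnt b : cmp (cnti b) (cnt b) = idm _. Proof. exact: invl. Qed.
Lemma cnt_nat (a b : B) (g : hom a b) : cmp (cnt b) (fmap F (fmap (eG E) g)) = cmp g (cnt a).
Proof. by have := ntc_natural (ec E) g; rewrite /= => ->. Qed.
Lemma cnti_nat (a b : B) (g : hom a b) : cmp (cnti b) g = cmp (fmap F (fmap (eG E) g)) (cnti a).
Proof.
rewrite -[cmp (cnti b) g]cmp_id_r -(cnt_cnti a) cmp_assoc -(cmp_assoc (cnti b)) -cnt_nat.
by rewrite !cmp_assoc cnti_cnt cmp_id_l.
Qed.
End FF.

Lemma idc_irr (D : Category) (a b : D) (e e' : a = b) : idc e = idc e'.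
Proof. by rewrite (proof_irrelevance _ e e'). Qed.
Lemma idc_cmp (D : Category) (a b c : D) (e1 : a = b) (e2 : b = c) :
  cmp (idc e2) (idc e1) = idc (etrans e1 e2).
Proof. destruct e1, e2; by rewrite /= cmp_id_l. Qed.
Lemma idc_refl (D : Category) (a : D) (e : a = a) : idc e = idm a.
Proof. by rewrite (UIPr e). Qed.
Lemma hEq_sq1 (D : Category) (a b a' b' : D) (X : hom a b) (Y : hom a' b') :
  hEq X Y -> forall (ea : a = a') (eb : b = b'), cmp (idc eb) X = cmp Y (idc ea).
Proof. case=> ea [eb E] ea' eb'; by rewrite (proof_irrelevance _ ea' ea) (proof_irrelevance _ eb' eb). Qed.
Lemma hEq_sq2 (D : Category) (a b a' b' : D) (X : hom a b) (Y : hom a' b') :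
  hEq X Y -> forall (ea : a' = a) (eb : b' = b), cmp X (idc ea) = cmp (idc eb) Y.
Proof. case=> ea [eb]; destruct ea, eb => /= E ea' eb'; rewrite !idc_refl; move: E. by rewrite !cmp_id_l !cmp_id_r. Qed.
Lemma fmap_idc (A B : Category) (F : Functor A B) (a b : A) (e : a = b) :
  fmap F (idc e) = idc (f_equal F e).
Proof. destruct e; by rewrite /= fmap_id. Qed.
Lemma idc_fst (A B : Category) (x y : ProdCat A B) (e : x = y) :
  ((idc e).1 : hom x.1 y.1) = idc (f_equal fst e).
Proof. by destruct e. Qed.
Lemma idc_snd (A B : Category) (x y : ProdCat A B) (e : x = y) :
  ((idc e).2 : hom x.2 y.2) = idc (f_equal snd e).
Proof. by destruct e. Qed.
Lemma pm_cmp (A B : Category) (a1 b1 c1 : A) (a2 b2 c2 : B) (f1 : hom a1 b1) (g1 : hom b1 c1)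
  (f2 : hom a2 b2) (g2 : hom b2 c2) : cmp (pm g1 g2) (pm f1 f2) = pm (cmp g1 f1) (cmp g2 f2).
Proof. by []. Qed.
Lemma idc_inv (D : Category) (a b : D) (e : a = b) : cmp (idc (esym e)) (idc e) = idm a.
Proof. by destruct e; rewrite /= cmp_id_l. Qed.
Lemma idc_inv' (D : Category) (a b : D) (e : a = b) : cmp (idc e) (idc (esym e)) = idm b.
Proof. by destruct e; rewrite /= cmp_id_l. Qed.

Lemma iso_sq (D : Category) (a b c d : D) (f : hom a b) (g : hom c d) (A : hom b d) (B : hom a c)
  (HA : is_iso A) (HB : is_iso B) : cmp A f = cmp g B -> cmp f (inv HB) = cmp (inv HA) g.
Proof.
move=> E.
rewrite -[cmp f (inv HB)]cmp_id_l -(invl HA) -cmp_assoc (cmp_assoc A) E.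
by rewrite -!cmp_assoc invr cmp_id_r.
Qed.

Lemma inv_cmp (D : Category) (a b c : D) (f : hom a b) (g : hom b c) (Hf : is_iso f) (Hg : is_iso g)
  (Hgf : is_iso (cmp g f)) : inv Hgf = cmp (inv Hf) (inv Hg).
Proof.
apply: inv_uniq; by rewrite cmp_assoc -(cmp_assoc (inv Hf)) invl cmp_id_r invl.
Qed.

Lemma inv_irr (D : Category) (a b : D) (f : hom a b) (H1 H2 : is_iso f) : inv H1 = inv H2.
Proof. apply: inv_uniq; exact: invl. Qed.

Lemma hEqL_idcl (D : Category) (a b b' c d : D) (e : b = b') (f : hom a b) (g : hom c d) :
  hEq f g -> hEq (cmp (idc e) f) g.
Proof. exact: hEq_trans (hEq_cmp_idcl e f). Qed.
Lemma hEqL_idcr (D : Category) (a a' b c d : D) (e : a' = a) (f : hom a b) (g : hom c d) :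
  hEq f g -> hEq (cmp f (idc e)) g.
Proof. exact: hEq_trans (hEq_cmp_idcr e f). Qed.
Lemma hEqR_idcl (D : Category) (a b b' c d : D) (e : b = b') (f : hom a b) (g : hom c d) :
  hEq g f -> hEq g (cmp (idc e) f).
Proof. move=> H; apply: hEq_sym; apply: hEqL_idcl; exact: hEq_sym. Qed.
Lemma hEqR_idcr (D : Category) (a a' b c d : D) (e : a' = a) (f : hom a b) (g : hom c d) :
  hEq g f -> hEq g (cmp f (idc e)).
Proof. move=> H; apply: hEq_sym; apply: hEqL_idcr; exact: hEq_sym. Qed.
Lemma hEqL_idc (D : Category) (a b c d : D) (e : a = b) (g : hom c d) :
  hEq (idm a) g -> hEq (idc e) g.
Proof. exact: hEq_trans (hEq_idc e). Qed.
Lemma hEqR_idc (D : Category) (a b c d : D) (e : a = b) (g : hom c d) :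
  hEq g (idm a) -> hEq g (idc e).
Proof. move=> H; apply: hEq_trans H (hEq_sym (hEq_idc e)). Qed.
Lemma hEqL_idml (D : Category) (a b c d : D) (f : hom a b) (g : hom c d) :
  hEq f g -> hEq (cmp (idm b) f) g.
Proof. by rewrite cmp_id_l. Qed.
Lemma hEqL_idmr (D : Category) (a b c d : D) (f : hom a b) (g : hom c d) :
  hEq f g -> hEq (cmp f (idm a)) g.
Proof. by rewrite cmp_id_r. Qed.
Lemma hEqR_idml (D : Category) (a b c d : D) (f : hom a b) (g : hom c d) :
  hEq g f -> hEq g (cmp (idm b) f).
Proof. by rewrite cmp_id_l. Qed.
Lemma hEqR_idmr (D : Category) (a b c d : D) (f : hom a b) (g : hom c d) :
  hEq g f -> hEq g (cmp f (idm a)).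
Proof. by rewrite cmp_id_r. Qed.
Lemma hEq_symR (D : Category) (a b c d : D) (f : hom a b) (g : hom c d) : hEq g f -> hEq f g.
Proof. exact: hEq_sym. Qed.

Lemma cmp_fst (A B : Category) (x y z : ProdCat A B) (g : hom y z) (f : hom x y) :
  ((cmp g f).1 : hom x.1 z.1) = cmp (g.1 : hom y.1 z.1) (f.1 : hom x.1 y.1).
Proof. by []. Qed.
Lemma cmp_snd (A B : Category) (x y z : ProdCat A B) (g : hom y z) (f : hom x y) :
  ((cmp g f).2 : hom x.2 z.2) = cmp (g.2 : hom y.2 z.2) (f.2 : hom x.2 y.2).
Proof. by []. Qed.
Lemma pm_fst (A B : Category) (a1 b1 : A) (a2 b2 : B) (f1 : hom a1 b1) (f2 : hom a2 b2) :
  ((pm f1 f2).1 : hom a1 b1) = f1.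
Proof. by []. Qed.
Lemma pm_snd (A B : Category) (a1 b1 : A) (a2 b2 : B) (f1 : hom a1 b1) (f2 : hom a2 b2) :
  ((pm f1 f2).2 : hom a2 b2) = f2.
Proof. by []. Qed.

Lemma pm_cmp' (A B : Category) (a1 b1 c1 : A) (a2 b2 c2 : B) (d : ProdCat A B) (f1 : hom a1 b1) (g1 : hom b1 c1)
  (f2 : hom a2 b2) (g2 : hom b2 c2) (h : hom d ((a1, a2) : ProdCat A B)) :
  cmp (pm g1 g2) (cmp (pm f1 f2) h) = cmp (pm (cmp g1 f1) (cmp g2 f2)) h.
Proof. by rewrite cmp_assoc. Qed.
Lemma invF (A B : Category) (F : Functor A B) (a b : A) (f : hom a b) (Hf : is_iso f) (c : B) (g : hom c (F b)) :
  cmp (fmap F f) (cmp (fmap F (inv Hf)) g) = g.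
Proof. by rewrite cmp_assoc -fmap_cmp invr fmap_id cmp_id_l. Qed.
Lemma invF' (A B : Category) (F : Functor A B) (a b : A) (f : hom a b) (Hf : is_iso f) :
  cmp (fmap F f) (fmap F (inv Hf)) = idm _.
Proof. by rewrite -fmap_cmp invr fmap_id. Qed.
Lemma hEq_invc (D : Category) (a b b' : D) (f : hom a b) (g : hom a b') (Hg : is_iso g) :
  hEq f g -> hEq (cmp f (inv Hg)) (idm b').
Proof. case=> ea [eb]; rewrite (UIPr ea); destruct eb; rewrite /= cmp_id_l cmp_id_r => ->; rewrite invr; exact: hEq_refl. Qed.
Lemma hEq_invcF (A B : Category) (F : Functor A B) (a b b' : A) (f : hom a b) (g : hom a b') (Hg : is_iso g) :
  hEq f g -> hEq (cmp (fmap F f) (fmap F (inv Hg))) (idm (F b')).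
Proof. case=> ea [eb]; rewrite (UIPr ea); destruct eb; rewrite /= cmp_id_l cmp_id_r => ->; rewrite invF'; exact: hEq_refl. Qed.

Lemma hEq_cmp_idl (D : Category) (a b c a' c' : D) (f : hom b c) (g : hom a b) (h : hom a' c') :
  hEq f (idm c') -> hEq g h -> hEq (cmp f g) h.
Proof. move=> H1 H2; apply: hEq_trans (hEq_cmp H2 H1) _; rewrite cmp_id_l; exact: hEq_refl. Qed.

Lemma hEq_addidr (D : Category) (a b c d : D) (f : hom a b) (g : hom c d) :
  hEq f (cmp g (idm c)) -> hEq f g.
Proof. by rewrite cmp_id_r. Qed.
Lemma hEq_addidl (D : Category) (a b c d : D) (f : hom a b) (g : hom c d) :
  hEq (cmp f (idm a)) g -> hEq f g.
Proof. by rewrite cmp_id_r. Qed.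

Lemma hEq_inv_cmp (D : Category) (a b c d : D) (g : hom a b) (h : hom c d) (k : hom a c)
  (Hg : is_iso g) (Hh : is_iso h) : hEq g (cmp h k) -> hEq (cmp k (inv Hg)) (inv Hh).
Proof.
case=> ea [eb]; rewrite (UIPr ea); destruct eb; rewrite /= cmp_id_l cmp_id_r => E.
apply: eq_hEq.
have E1 : cmp h (cmp k (inv Hg)) = idm _ by rewrite cmp_assoc -E invr.
by rewrite -[cmp k (inv Hg)]cmp_id_l -(invl Hh) -cmp_assoc E1 cmp_id_r.
Qed.

Definition dcol (n : nat) : DHom n 1.
Proof. exists [ffun _ => ord0]; apply/monobP => i j _; by rewrite !ffunE. Defined.

Lemma dcol_comp (m n : nat) (f : DHom m n) : dcomp (dcol n) f = dcol m.
Proof. apply: dhom_eq => i; by rewrite /= !ffunE. Qed.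

Lemma did1 : did 1 = dcol 1.
Proof. apply: dhom_eq => i; rewrite /= !ffunE; apply: val_inj => /=; by case: i => [[|k] Hk]. Qed.

Lemma split_lshift (m n : nat) (j : 'I_m) : split (lshift n j) = inl j.
Proof. exact: (unsplitK (inl j)). Qed.
Lemma split_rshift (m n : nat) (k : 'I_n) : split (rshift m k) = inr k.
Proof. exact: (unsplitK (inr k)). Qed.

Ltac dsplit := match goal with |- context [@split ?m ?n ?x] =>
  let k := fresh "k" in let Hk := fresh "Hk" in let E := fresh "E" in
  (lazymatch x with context [split _] => fail | _ => idtac end);
  case: (@splitP m n x) => /= [[k Hk] /= E|[k Hk] /= E] end.
Ltac dtac := apply: dhom_eq => -[i Hi]; apply: val_inj; rewrite /= ?ffunE /dplus_fun /=;
  repeat (rewrite /= ?ffunE ?split_lshift ?split_rshift /=; try unfold dplus_fun; dsplit);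
  rewrite /= ?ffunE ?split_lshift ?split_rshift /=; try unfold dplus_fun; rewrite /= ?ffunE; try unfold ord0; simpl; lia.

Definition d1 := dplus (dcol 2) (did 1).
Definition d2 := dplus (did 1) (dcol 2).
Lemma test : dplus (dplus (dcol 2) (did 1)) (did 1) = dplus (dcol 2) (did 2) :> DHom 4 3.
Proof. rewrite /d1. dtac. Qed.
Lemma test2 : dcomp d1 (dplus (dplus (dcol 2) (did 1)) (did 1)) = dcomp d1 (dplus (dplus (did 1) (dcol 2)) (did 1)) :> DHom 4 2.
Proof. rewrite /d1; dtac. Qed.

Section HM.
Variable H : HomotopyMonoid.
Local Notation C := (HC H).
Local Notation CM := (HCmap H).
Local Notation xi := (xi H).

Lemma HCidO n (x : C n) : CM (did n) x = x.
Proof. exact: (Feq_ob (HCmap_id H n) x). Qed.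
Lemma HCidM n (x y : C n) (f : hom x y) : hEq (fmap (CM (did n)) f) f.
Proof. exact: (Feq_hEq (HCmap_id H n) f). Qed.
Lemma HCcompO m n p (g : DHom n p) (f : DHom m n) (x : C m) : CM (dcomp g f) x = CM g (CM f x).
Proof. exact: (Feq_ob (HCmap_comp H g f) x). Qed.
Lemma HCcompM m n p (g : DHom n p) (f : DHom m n) (x y : C m) (h : hom x y) :
  hEq (fmap (CM (dcomp g f)) h) (fmap (CM g) (fmap (CM f) h)).
Proof. exact: (Feq_hEq (HCmap_comp H g f) h). Qed.

Lemma natO m m' n n' (f : DHom m m') (g : DHom n n') (x : C (m + n)) :
  ((CM f (xi m n x).1, CM g (xi m n x).2) : ProdCat (C m') (C n')) = xi m' n' (CM (dplus f g) x).
Proof. exact: (Feq_ob (xi_natural H f g) x). Qed.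
Lemma natM m m' n n' (f : DHom m m') (g : DHom n n') (x y : C (m + n)) (h : hom x y) :
  hEq (pm (fmap (CM f) (fmap (xi m n) h).1) (fmap (CM g) (fmap (xi m n) h).2))
      (fmap (xi m' n') (fmap (CM (dplus f g)) h)).
Proof. exact: (Feq_hEq (xi_natural H f g) h). Qed.

Lemma coO m n p (x : C (m + n + p)) :
  ((((xi m n (xi (m + n) p x).1), (xi (m + n) p x).2)) : ProdCat (ProdCat (C m) (C n)) (C p)) =
  ((((xi m (n + p) (CM (dassoc m n p) x)).1, (xi n p (xi m (n + p) (CM (dassoc m n p) x)).2).1),
    (xi n p (xi m (n + p) (CM (dassoc m n p) x)).2).2)).
Proof. exact: (Feq_ob (xi_coassoc H m n p) x). Qed.
Lemma coM m n p (x y : C (m + n + p)) (h : hom x y) :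
  hEq (((pm (fmap (xi m n) (fmap (xi (m + n) p) h).1) (fmap (xi (m + n) p) h).2)))
      (((pm (pm (fmap (xi m (n + p)) (fmap (CM (dassoc m n p)) h)).1
               (fmap (xi n p) (fmap (xi m (n + p)) (fmap (CM (dassoc m n p)) h)).2).1)
            (fmap (xi n p) (fmap (xi m (n + p)) (fmap (CM (dassoc m n p)) h)).2).2))).
Proof. exact: (Feq_hEq (xi_coassoc H m n p) h). Qed.

Lemma culO n (x : C n) :
  ((xi0 H (xi 0 n x).1, (xi 0 n x).2) : ProdCat TermCat (C n)) = ((tt : TermCat), CM (dlunit n) x).
Proof. exact: (Feq_ob (xi_counit_l H n) x). Qed.
Lemma culM n (x y : C n) (h : hom x y) :
  hEq (pm (fmap (xi0 H) (fmap (xi 0 n) h).1) (fmap (xi 0 n) h).2)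
      (pm (tt : hom (tt : TermCat) tt) (fmap (CM (dlunit n)) h)).
Proof. exact: (Feq_hEq (xi_counit_l H n) h). Qed.
Lemma curO n (x : C (n + 0)) :
  (((xi n 0 x).1, xi0 H (xi n 0 x).2) : ProdCat (C n) TermCat) = (CM (drunit n) x, (tt : TermCat)).
Proof. exact: (Feq_ob (xi_counit_r H n) x). Qed.
Lemma curM n (x y : C (n + 0)) (h : hom x y) :
  hEq (pm (fmap (xi n 0) h).1 (fmap (xi0 H) (fmap (xi n 0) h).2))
      (pm (fmap (CM (drunit n)) h) (tt : hom (tt : TermCat) tt)).
Proof. exact: (Feq_hEq (xi_counit_r H n) h). Qed.
End HM.

Lemma dassoc111 : dassoc 1 1 1 = did 3.
Proof. apply: dhom_eq => i; apply: val_inj; by rewrite /= !ffunE. Qed.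

Lemma dd12 : dcomp (dcol 2) d1 = dcomp (dcol 2) d2.
Proof. by rewrite !dcol_comp. Qed.

Section Main.
Variable H : HomotopyMonoid.
Local Notation C := (HC H).
Local Notation CM := (HCmap H).
Local Notation K := (HC H 1).
Definition X11 : Functor (C 2) (ProdCat K K) := xi H 1 1.
Definition X21 : Functor (C 3) (ProdCat (C 2) K) := xi H 2 1.
Definition X12 : Functor (C 3) (ProdCat K (C 2)) := xi H 1 2.
Definition Md1 : Functor (C 3) (C 2) := CM d1.
Definition Md2 : Functor (C 3) (C 2) := CM d2.
Variable E11 : EqvData X11.
Variable E21 : EqvData X21.

Local Notation xi11 := X11.
Local Notation xi21 := X21.
Local Notation xi12 := X12.
Local Notation s := (eG E11).
Local Notation m := (CM (dcol 2)).
Local Notation up := (lift E11).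
Local Notation cn := (cnt E11).
Local Notation cni := (cnti E11).

Local Notation KK := (ProdCat K K).
Definition tens (a b : K) : K := m (s ((a, b) : KK)).

Definition idC (x : K) : hom x (CM (did 1) x) := idc (esym (HCidO x)).

Lemma co111O (t : C 3) :
  (xi11 (xi21 t).1).1 = (xi12 t).1 /\
  (((xi11 (xi21 t).1).2, (xi21 t).2) : KK) = xi11 (xi12 t).2.
Proof.
move: (@coO H 1 1 1 t); rewrite dassoc111 HCidO => -[e1 e2]; split; first by rewrite e1.
by rewrite e1 e2 /=; case: (xi11 _).
Qed.
Definition E1 (t : C 3) := proj1 (co111O t).
Definition E2 (t : C 3) := proj2 (co111O t).

Definition natL (t : C 3) : ((m (xi21 t).1, CM (did 1) (xi21 t).2) : KK) = xi11 (Md1 t) :=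
  @natO H 2 1 1 1 (dcol 2) (did 1) t.
Definition natR (t : C 3) : ((CM (did 1) (xi12 t).1, m (xi12 t).2) : KK) = xi11 (Md2 t) :=
  @natO H 1 1 2 1 (did 1) (dcol 2) t.

Section Kappa.
Variables (a b c : K) (t : C 3) (p : hom (s ((a, b) : KK)) (xi21 t).1) (q : hom c (xi21 t).2).

Definition kL : hom (s ((tens a b, c) : KK)) (Md1 t) :=
  up (cmp (idc (natL t)) (cmp (pm (fmap m p) (cmp (fmap (CM (did 1)) q) (idC c)))
                               (cn ((tens a b, c) : KK)))).

Definition pR : hom a (xi12 t).1 :=
  cmp (idc (E1 t)) (cmp (fmap xi11 p).1 (cni ((a, b) : KK)).1).

Definition qR : hom (s ((b, c) : KK)) (xi12 t).2 :=
  up (cmp (idc (E2 t)) (cmp (pm (cmp (fmap xi11 p).2 (cni ((a, b) : KK)).2) q)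
                           (cn ((b, c) : KK)))).

Definition kR : hom (s ((a, tens b c) : KK)) (Md2 t) :=
  up (cmp (idc (natR t)) (cmp (pm (cmp (fmap (CM (did 1)) pR) (idC a)) (fmap m qR))
                               (cn ((a, tens b c) : KK)))).

Hypotheses (Hp : is_iso p) (Hq : is_iso q).

Lemma kL_iso : is_iso kL.
Proof.
apply: iso_lift; apply: iso_cmp; last apply: iso_idc.
apply: iso_cmp; first exact: cnt_iso.
apply: iso_pm; first exact: iso_fmap.
apply: iso_cmp; [exact: iso_idc| exact: iso_fmap].
Qed.

Lemma pR_iso : is_iso pR.
Proof.
apply: iso_cmp; last exact: iso_idc.
apply: iso_cmp; first exact: (iso_fst (cnti_iso _ _)).
exact: (iso_fst (iso_fmap _ Hp)).
Qed.

Lemma qR_iso : is_iso qR.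
Proof.
apply: iso_lift; apply: iso_cmp; last exact: iso_idc.
apply: iso_cmp; first exact: cnt_iso.
apply: iso_pm => //.
apply: iso_cmp; first exact: (iso_snd (cnti_iso _ _)).
exact: (iso_snd (iso_fmap _ Hp)).
Qed.

Lemma kR_iso : is_iso kR.
Proof.
apply: iso_lift; apply: iso_cmp; last apply: iso_idc.
apply: iso_cmp; first exact: cnt_iso.
apply: iso_pm; last by apply: iso_fmap; exact: qR_iso.
apply: iso_cmp; [exact: iso_idc| apply: iso_fmap; exact: pR_iso].
Qed.

Definition e3 : m (Md1 t) = m (Md2 t) :=
  etrans (esym (@HCcompO H 3 2 1 (dcol 2) d1 t)) (etrans (f_equal (fun f => CM f t) dd12) (@HCcompO H 3 2 1 (dcol 2) d2 t)).

Definition alpha : hom (tens (tens a b) c) (tens a (tens b c)) :=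
  cmp (fmap m (inv kR_iso)) (cmp (idc e3) (fmap m kL)).
End Kappa.


Lemma idC_nat (x y : K) (h : hom x y) : cmp (idC y) h = cmp (fmap (CM (did 1)) h) (idC x).
Proof. symmetry; exact: (hEq_sq2 (HCidM h)). Qed.

Lemma natLsq (t t' : C 3) (phi : hom t t') :
  cmp (fmap xi11 (fmap (Md1) phi)) (idc (natL t)) =
  cmp (idc (natL t')) (pm (fmap m (fmap xi21 phi).1) (fmap (CM (did 1)) (fmap xi21 phi).2)).
Proof. symmetry; exact: (hEq_sq1 (@natM H 2 1 1 1 (dcol 2) (did 1) _ _ phi)). Qed.

Lemma natRsq (t t' : C 3) (phi : hom t t') :
  cmp (fmap xi11 (fmap (Md2) phi)) (idc (natR t)) =
  cmp (idc (natR t')) (pm (fmap (CM (did 1)) (fmap xi12 phi).1) (fmap m (fmap xi12 phi).2)).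
Proof. symmetry; exact: (hEq_sq1 (@natM H 1 1 2 1 (did 1) (dcol 2) _ _ phi)). Qed.


Lemma co1M (t t' : C 3) (phi : hom t t') :
  hEq (fmap xi11 (fmap xi21 phi).1).1 (fmap xi12 phi).1.
Proof.
have := hEq_fst (hEq_fst (@coM H 1 1 1 t t' phi)); rewrite /= dassoc111 => X.
apply: hEq_trans X _; apply: (hEq_fst (hEq_fmap _ (HCidM phi))).
Qed.

Lemma co2M (t t' : C 3) (phi : hom t t') :
  hEq (pm (fmap xi11 (fmap xi21 phi).1).2 (fmap xi21 phi).2) (fmap xi11 (fmap xi12 phi).2).
Proof.
have X := @coM H 1 1 1 t t' phi; rewrite dassoc111 in X.
apply: hEq_pair.
  apply: hEq_trans (hEq_snd (hEq_fst X)) _ => /=.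
  apply: (hEq_fst (hEq_fmap _ (hEq_snd (hEq_fmap _ (HCidM phi))))).
apply: hEq_trans (hEq_snd X) _ => /=.
apply: (hEq_snd (hEq_fmap _ (hEq_snd (hEq_fmap _ (HCidM phi))))).
Qed.

Lemma co1sq (t t' : C 3) (phi : hom t t') :
  cmp (fmap xi12 phi).1 (idc (E1 t)) = cmp (idc (E1 t')) (fmap xi11 (fmap xi21 phi).1).1.
Proof. exact: (hEq_sq2 (hEq_sym (co1M phi))). Qed.

Lemma co2sq (t t' : C 3) (phi : hom t t') :
  cmp (fmap xi11 (fmap xi12 phi).2) (idc (E2 t)) =
  cmp (idc (E2 t')) (pm (fmap xi11 (fmap xi21 phi).1).2 (fmap xi21 phi).2).
Proof. exact: (hEq_sq2 (hEq_sym (co2M phi))). Qed.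

Lemma e3sq (t t' : C 3) (phi : hom t t') :
  cmp (idc (e3 t')) (fmap m (fmap Md1 phi)) = cmp (fmap m (fmap Md2 phi)) (idc (e3 t)).
Proof.
apply: hEq_sq1.
apply: hEq_trans (hEq_sym (@HCcompM H 3 2 1 (dcol 2) d1 _ _ phi)) _.
rewrite dd12; exact: (@HCcompM H 3 2 1 (dcol 2) d2 _ _ phi).
Qed.

Section Nat.
Variables (a b c a' b' c' : K) (t t' : C 3) (p : hom (s ((a, b) : KK)) (xi21 t).1) (q : hom c (xi21 t).2)
  (p_ : hom (s ((a', b') : KK)) (xi21 t').1) (q_ : hom c' (xi21 t').2)
  (f : hom a a') (g : hom b b') (h : hom c c') (phi : hom t t').
Hypothesis L1 : cmp (fmap xi21 phi).1 p = cmp p_ (fmap s (pm f g : @hom KK (a, b) (a', b'))).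
Hypothesis L2 : cmp (fmap xi21 phi).2 q = cmp q_ h.

Lemma kL_nat : cmp (kL p_ q_) (fmap s (pm (fmap m (fmap s (pm f g : @hom KK (a, b) (a', b')))) h : @hom KK (tens a b, c) (tens a' b', c')))
  = cmp (fmap (Md1) phi) (kL p q).
Proof.
apply: (ff_faithful E11); rewrite !fmap_cmp /kL !lift_K.
rewrite -!cmp_assoc cnt_nat !cmp_assoc; congr (cmp _ _).
rewrite natLsq -!cmp_assoc; congr (cmp _ _).
rewrite !pm_cmp; congr pm.
  by rewrite -!fmap_cmp L1.
by rewrite -cmp_assoc idC_nat !cmp_assoc -!fmap_cmp L2.
Qed.

Lemma R1 : cmp (fmap xi12 phi).1 (pR p) = cmp (pR p_) f.
Proof.
rewrite /pR !cmp_assoc co1sq -!cmp_assoc; congr (cmp _ _).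
rewrite !cmp_assoc; have := f_equal (fun k => (fmap xi11 k).1) L1.
rewrite /= !fmap_cmp /= => ->.
rewrite -!cmp_assoc; congr (cmp _ _).
have := f_equal fst (cnti_nat E11 (pm f g : @hom KK (a, b) (a', b'))).
by rewrite /= => <-.
Qed.

Lemma R2 : cmp (fmap xi12 phi).2 (qR p q) = cmp (qR p_ q_) (fmap s (pm g h : @hom KK (b, c) (b', c'))).
Proof.
apply: (ff_faithful E11); rewrite !fmap_cmp /qR !lift_K.
rewrite -!cmp_assoc cnt_nat !cmp_assoc co2sq -!cmp_assoc; congr (cmp _ _).
rewrite !cmp_assoc; congr (cmp _ _); rewrite !pm_cmp; congr pm; last by rewrite L2.
rewrite !cmp_assoc; have := f_equal (fun k => (fmap xi11 k).2) L1.
rewrite /= !fmap_cmp /= => ->.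
rewrite -!cmp_assoc; congr (cmp _ _).
have := f_equal snd (cnti_nat E11 (pm f g : @hom KK (a, b) (a', b'))).
by rewrite /= => <-.
Qed.

Lemma kR_nat : cmp (kR p_ q_) (fmap s (pm f (fmap m (fmap s (pm g h : @hom KK (b, c) (b', c')))) : @hom KK (a, tens b c) (a', tens b' c')))
  = cmp (fmap (Md2) phi) (kR p q).
Proof.
apply: (ff_faithful E11); rewrite !fmap_cmp /kR !lift_K.
rewrite -!cmp_assoc cnt_nat !cmp_assoc; congr (cmp _ _).
rewrite natRsq -!cmp_assoc; congr (cmp _ _).
rewrite !pm_cmp; congr pm.
  by rewrite -cmp_assoc idC_nat !cmp_assoc -!fmap_cmp R1.
by rewrite -!fmap_cmp R2.
Qed.

Hypotheses (Hp : is_iso p) (Hq : is_iso q) (Hp_ : is_iso p_) (Hq_ : is_iso q_).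

Lemma alpha_nat :
  cmp (alpha Hp_ Hq_) (fmap m (fmap s (pm (fmap m (fmap s (pm f g : @hom KK (a, b) (a', b')))) h : @hom KK (tens a b, c) (tens a' b', c'))))
  = cmp (fmap m (fmap s (pm f (fmap m (fmap s (pm g h : @hom KK (b, c) (b', c')))) : @hom KK (a, tens b c) (a', tens b' c')))) (alpha Hp Hq).
Proof.
rewrite /alpha -!cmp_assoc -fmap_cmp kL_nat fmap_cmp !cmp_assoc; congr (cmp _ _).
rewrite -!cmp_assoc e3sq !cmp_assoc; congr (cmp _ _).
rewrite -!fmap_cmp; congr (fmap _ _).
symmetry; apply: iso_sq; exact: kR_nat.
Qed.
End Nat.


Lemma pmid (A B : Category) (a : A) (b : B) : pm (idm a) (idm b) = idm ((a, b) : ProdCat A B).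
Proof. by []. Qed.

Lemma alpha_indep (a b c : K) (t t' : C 3) (p : hom (s ((a, b) : KK)) (xi21 t).1) (q : hom c (xi21 t).2)
  (p_ : hom (s ((a, b) : KK)) (xi21 t').1) (q_ : hom c (xi21 t').2)
  (Hp : is_iso p) (Hq : is_iso q) (Hp_ : is_iso p_) (Hq_ : is_iso q_) :
  alpha Hp Hq = alpha Hp_ Hq_.
Proof.
pose phi := lift E21 ((cmp p_ (inv Hp), cmp q_ (inv Hq)) : hom (xi21 t) (xi21 t')).
have := @alpha_nat a b c a b c t t' p q p_ q_ (idm a) (idm b) (idm c) phi _ _ Hp Hq Hp_ Hq_.
rewrite /phi !lift_K /= -!cmp_assoc !invl !cmp_id_r.
repeat rewrite ?pmid ?fmap_id; rewrite cmp_id_r cmp_id_l.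
move=> /(_ erefl erefl); rewrite cmp_id_r => E; by rewrite -E.
Qed.

Lemma cc1 (x : KK) : cmp (cn x).1 (cni x).1 = idm x.1.
Proof. exact: (f_equal fst (cnt_cnti E11 x)). Qed.
Lemma cc2 (x : KK) : cmp (cn x).2 (cni x).2 = idm x.2.
Proof. exact: (f_equal snd (cnt_cnti E11 x)). Qed.
Lemma cc0 (x : KK) : cmp (cn x) (cni x) = idm x.
Proof. exact: (cnt_cnti E11 x). Qed.
Lemma cc1' (x : KK) (d : K) (f : hom d x.1) : cmp (cn x).1 (cmp (cni x).1 f) = f.
Proof. by rewrite cmp_assoc cc1 cmp_id_l. Qed.
Lemma cc2' (x : KK) (d : K) (f : hom d x.2) : cmp (cn x).2 (cmp (cni x).2 f) = f.
Proof. by rewrite cmp_assoc cc2 cmp_id_l. Qed.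

Lemma ccF1 (D : Category) (F : Functor K D) (x : KK) (d : D) (f : hom d (F x.1)) :
  cmp (fmap F (cn x).1) (cmp (fmap F (cni x).1) f) = f.
Proof. by rewrite cmp_assoc -fmap_cmp cc1 fmap_id cmp_id_l. Qed.
Lemma ccF2 (D : Category) (F : Functor K D) (x : KK) (d : D) (f : hom d (F x.2)) :
  cmp (fmap F (cn x).2) (cmp (fmap F (cni x).2) f) = f.
Proof. by rewrite cmp_assoc -fmap_cmp cc2 fmap_id cmp_id_l. Qed.
Lemma ccF1' (D : Category) (F : Functor K D) (x : KK) :
  cmp (fmap F (cn x).1) (fmap F (cni x).1) = idm _.
Proof. by rewrite -fmap_cmp cc1 fmap_id. Qed.
Lemma ccF2' (D : Category) (F : Functor K D) (x : KK) :
  cmp (fmap F (cn x).2) (fmap F (cni x).2) = idm _.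
Proof. by rewrite -fmap_cmp cc2 fmap_id. Qed.

Lemma cnt_nat' (x y : KK) (g : hom x y) (d : C 2) (f : hom d (s x)) :
  cmp (cn y) (cmp (fmap xi11 (fmap s g)) (fmap xi11 f)) = cmp g (cmp (cn x) (fmap xi11 f)).
Proof. by rewrite !cmp_assoc cnt_nat. Qed.

Lemma xsF (x y : KK) (F : hom x y) : fmap xi11 (fmap s F) = cmp (cni y) (cmp F (cn x)).
Proof.
rewrite -cnt_nat cmp_assoc /cni.
by rewrite (cnti_cnt E11) cmp_id_l.
Qed.
End Main.

Ltac hE_hook := fail.
Ltac hE := first [hE_hook; hE | hE0]
with hE0 := lazymatch goal with
 | |- hEq ?f ?f => apply: hEq_refl
 | |- hEq _ (cmp _ (alpha _ _)) => idtac
 | |- hEq (cmp (idc _) _) _ => apply: hEqL_idcl; hE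
 | |- hEq _ (cmp (idc _) _) => apply: hEqR_idcl; hE
 | |- hEq (cmp _ (idc _)) _ => apply: hEqL_idcr; hE
 | |- hEq _ (cmp _ (idc _)) => apply: hEqR_idcr; hE
 | |- hEq (cmp (idm _) _) _ => apply: hEqL_idml; hE
 | |- hEq _ (cmp (idm _) _) => apply: hEqR_idml; hE
 | |- hEq (cmp _ (idm _)) _ => apply: hEqL_idmr; hE
 | |- hEq _ (cmp _ (idm _)) => apply: hEqR_idmr; hE
 | |- hEq (idc _) (idc _) => apply: hEq_idc2
 | |- hEq (idc _) _ => apply: hEqL_idc; hE
 | |- hEq _ (idc _) => apply: hEqR_idc; hE
 | |- hEq (fmap (HCmap _ (did _)) _) _ => apply: hEq_trans (HCidM _) _; hE
 | |- hEq _ (fmap (HCmap _ (did _)) _) => apply: hEq_symR; apply: hEq_trans (HCidM _) _; apply: hEq_symR; hE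
 | |- hEq (cmp _ _) (cmp _ _) => apply: hEq_cmp; hE
 | |- hEq (cmp _ _) _ => apply: hEq_addidr; apply: hEq_cmp; hE
 | |- hEq _ (cmp _ _) => apply: hEq_addidl; apply: hEq_cmp; hE
 | |- hEq (idm _) (idm _) => apply: hEq_idm; try done
 | |- hEq (fmap ?F _) (fmap ?F _) => apply: hEq_fmap; hE
 | |- hEq (pm _ _) (pm _ _) => apply: hEq_pm; hE
 | |- hEq (_, _) (_, _) => apply: hEq_pair; hE
 | |- hEq (fst _) (fst _) => first [apply: hEq_fst; hE | idtac]
 | |- hEq (snd _) (snd _) => first [apply: hEq_snd; hE | idtac]
 | |- _ => first [apply: hEq_refl | assumption | idtac]
 end.

Lemma dassoc211 : dassoc 2 1 1 = did 4.
Proof. apply: dhom_eq => i; apply: val_inj; by rewrite /= !ffunE. Qed.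
Lemma dassoc121 : dassoc 1 2 1 = did 4.
Proof. apply: dhom_eq => i; apply: val_inj; by rewrite /= !ffunE. Qed.
Lemma dassoc112 : dassoc 1 1 2 = did 4.
Proof. apply: dhom_eq => i; apply: val_inj; by rewrite /= !ffunE. Qed.

Definition f1 : DHom 4 3 := dplus d1 (did 1).
Definition f4 : DHom 4 3 := dplus d2 (did 1).
Definition f2 : DHom 4 3 := dplus (did 2) (dcol 2).
Lemma f1E : f1 = dplus (dcol 2) (did 2) :> DHom 4 3. Proof. rewrite /f1 /d1; dtac. Qed.
Lemma f2E : f2 = dplus (did 1) d2 :> DHom 4 3. Proof. rewrite /f2 /d2; dtac. Qed.
Lemma f4E : f4 = dplus (did 1) d1 :> DHom 4 3. Proof. rewrite /f4 /d2 /d1; dtac. Qed.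
Lemma fA : dcomp d1 f1 = dcomp d1 f4. Proof. rewrite /f1 /f4 /d1 /d2; dtac. Qed.
Lemma fB : dcomp d2 f1 = dcomp d1 f2. Proof. rewrite /f1 /f2 /d1 /d2; dtac. Qed.
Lemma fC : dcomp d2 f2 = dcomp d2 f4. Proof. rewrite /f2 /f4 /d1 /d2; dtac. Qed.

Section Pent.
Variable H : HomotopyMonoid.
Local Notation C := (HC H).
Local Notation CM := (HCmap H).
Local Notation K := (HC H 1).
Local Notation KK := (ProdCat K K).
Definition X31 : Functor (C 4) (ProdCat (C 3) K) := xi H 3 1.
Definition X22 : Functor (C 4) (ProdCat (C 2) (C 2)) := xi H 2 2.
Definition X13 : Functor (C 4) (ProdCat K (C 3)) := xi H 1 3.
Local Notation xi11 := (X11 H).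
Local Notation xi21 := (X21 H).
Local Notation xi12 := (X12 H).
Local Notation m := (CM (dcol 2)).

Section T.
Variable T : C 4.
Lemma OA1 : xi21 (CM f1 T) = ((Md1 H (X31 T).1, CM (did 1) (X31 T).2) : ProdCat (C 2) K).
Proof. exact: esym (@natO H 3 2 1 1 d1 (did 1) T). Qed.
Lemma OA4 : xi21 (CM f4 T) = ((Md2 H (X31 T).1, CM (did 1) (X31 T).2) : ProdCat (C 2) K).
Proof. exact: esym (@natO H 3 2 1 1 d2 (did 1) T). Qed.
Lemma OB : xi12 (CM f1 T) = ((m (X22 T).1, CM (did 2) (X22 T).2) : ProdCat K (C 2)).
Proof. rewrite f1E; exact: esym (@natO H 2 1 2 2 (dcol 2) (did 2) T). Qed.
Lemma O2 : xi21 (CM f2 T) = ((CM (did 2) (X22 T).1, m (X22 T).2) : ProdCat (C 2) K).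
Proof. exact: esym (@natO H 2 2 2 1 (did 2) (dcol 2) T). Qed.
Lemma OC2 : xi12 (CM f2 T) = ((CM (did 1) (X13 T).1, Md2 H (X13 T).2) : ProdCat K (C 2)).
Proof. rewrite f2E; exact: esym (@natO H 1 1 3 2 (did 1) d2 T). Qed.
Lemma OC4 : xi12 (CM f4 T) = ((CM (did 1) (X13 T).1, Md1 H (X13 T).2) : ProdCat K (C 2)).
Proof. rewrite f4E; exact: esym (@natO H 1 1 3 2 (did 1) d1 T). Qed.
Lemma Co211 : xi21 (X31 T).1 = (((X22 T).1, (xi11 (X22 T).2).1) : ProdCat (C 2) K) /\
  (X31 T).2 = (xi11 (X22 T).2).2.
Proof. move: (@coO H 2 1 1 T); rewrite dassoc211 HCidO => -[e1 e2]; by split. Qed.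
Lemma Co121 : xi12 (X31 T).1 = (((X13 T).1, (xi21 (X13 T).2).1) : ProdCat K (C 2)) /\
  (X31 T).2 = (xi21 (X13 T).2).2.
Proof. move: (@coO H 1 2 1 T); rewrite dassoc121 HCidO => -[e1 e2]; by split. Qed.
Lemma Co112 : xi11 (X22 T).1 = (((X13 T).1, (xi12 (X13 T).2).1) : KK) /\
  (X22 T).2 = (xi12 (X13 T).2).2.
Proof. move: (@coO H 1 1 2 T); rewrite dassoc112 HCidO => -[e1 e2]; by split. Qed.
Lemma TA : Md1 H (CM f1 T) = Md1 H (CM f4 T).
Proof. rewrite /Md1 -!HCcompO; by rewrite fA. Qed.
Lemma TB : Md2 H (CM f1 T) = Md1 H (CM f2 T).
Proof. rewrite /Md1 /Md2 -!HCcompO; by rewrite fB. Qed.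
Lemma TC : Md2 H (CM f2 T) = Md2 H (CM f4 T).
Proof. rewrite /Md2 -!HCcompO; by rewrite fC. Qed.
End T.

Variable E11 : EqvData (X11 H).
Local Notation s := (eG E11).
Local Notation tens := (tens E11).
Local Notation cn := (cnt E11).
Local Notation cni := (cnti E11).

Lemma co211b (T : C 4) : (((xi21 (X31 T).1).2, (X31 T).2) : KK) = xi11 (X22 T).2.
Proof. case: (Co211 T) => e1 e2; rewrite e1 e2 /=; by case: (xi11 _). Qed.

Ltac nrm := do 3 (rewrite ?fmap_cmp ?fmap_idc ?lift_K ?cmp_fst ?cmp_snd ?pm_fst ?pm_snd ?idc_fst ?idc_snd -?cmp_assoc ?cnt_nat ?cnt_nat' ?pm_cmp ?pm_cmp' ?invF ?invF' ?cc1' ?cc2' ?cc1 ?cc2 ?ccF1 ?ccF2 ?ccF1' ?ccF2' ?cmp_id_r ?cmp_id_l).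

Section Data.
Variables (w x y z : K) (T : C 4).
Variables (p0 : hom (s ((w, x) : KK)) (xi21 (X31 T).1).1) (q0 : hom y (xi21 (X31 T).1).2)
  (Z : hom z (X31 T).2).
Hypotheses (Hp0 : is_iso p0) (Hq0 : is_iso q0) (HZ : is_iso Z).

Definition p1 : hom (s ((tens w x, y) : KK)) (xi21 (CM f1 T)).1 :=
  cmp (idc (esym (f_equal fst (OA1 T)))) (kL p0 q0).
Definition q1 : hom z (xi21 (CM f1 T)).2 :=
  cmp (idc (esym (f_equal snd (OA1 T)))) (cmp (fmap (CM (did 1)) Z) (idC z)).
Definition p4 : hom (s ((w, tens x y) : KK)) (xi21 (CM f4 T)).1 :=
  cmp (idc (esym (f_equal fst (OA4 T)))) (kR p0 q0).
Definition q4 : hom z (xi21 (CM f4 T)).2 :=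
  cmp (idc (esym (f_equal snd (OA4 T)))) (cmp (fmap (CM (did 1)) Z) (idC z)).
Definition PP : hom (s ((w, x) : KK)) (X22 T).1 :=
  cmp (idc (f_equal fst (proj1 (Co211 T)))) p0.
Definition QQ : hom (s ((y, z) : KK)) (X22 T).2 :=
  lift E11 (cmp (idc (co211b T)) (cmp (pm q0 Z) (cn ((y, z) : KK)))).
Definition p2 : hom (s ((w, x) : KK)) (xi21 (CM f2 T)).1 :=
  cmp (idc (esym (f_equal fst (O2 T)))) (cmp (fmap (CM (did 2)) PP) (idc (esym (HCidO _)))).
Definition q2 : hom (tens y z) (xi21 (CM f2 T)).2 :=
  cmp (idc (esym (f_equal snd (O2 T)))) (fmap m QQ).
Definition p0' : hom (s ((x, y) : KK)) (xi21 (X13 T).2).1 :=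
  cmp (idc (f_equal snd (proj1 (Co121 T)))) (qR p0 q0).
Definition q0' : hom z (xi21 (X13 T).2).2 :=
  cmp (idc (proj2 (Co121 T))) Z.

Lemma vertexB : hEq (kR p1 q1) (kL p2 q2).
Proof.
apply: (ff_hEq E11) => //; first exact: TB.
rewrite /kR /kL /pR /qR /p1 /q1 /p2 /q2 /PP /QQ /idC; nrm.
hE.
apply: (ff_hEq E11) => //; first by rewrite OB /= HCidO.
rewrite /idC; nrm; hE.
Qed.


Lemma vertexA : hEq (kL p1 q1) (cmp (kL p4 q4) (fmap s (pm (alpha Hp0 Hq0) (idm z) : @hom KK (tens (tens w x) y, z) (tens w (tens x y), z)))).
Proof.
apply: (ff_hEq E11) => //; first exact: TA.
rewrite /kL /alpha /p1 /q1 /p4 /q4 /idC; nrm.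
hE.
Qed.

Lemma QC2 : hEq (qR p2 q2) (kR p0' q0').
Proof.
apply: (ff_hEq E11) => //; first by rewrite OC2.
rewrite /kR /qR /pR /p2 /q2 /p0' /q0' /PP /QQ /idC; nrm.
hE.
apply: (ff_hEq E11) => //; first exact: (proj2 (Co112 T)).
nrm; hE.
Qed.

Lemma QC4 : hEq (qR p4 q4) (kL p0' q0').
Proof.
apply: (ff_hEq E11) => //; first by rewrite OC4.
rewrite /kL /qR /pR /p4 /q4 /p0' /q0' /idC; nrm.
hE.
Qed.

Lemma p0'_iso : is_iso p0'.
Proof. apply: iso_cmp; [exact: qR_iso | exact: iso_idc]. Qed.
Lemma q0'_iso : is_iso q0'.
Proof. apply: iso_cmp; [exact: HZ | exact: iso_idc]. Qed.

Lemma PC : hEq (pR p4) (pR p2).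
Proof. rewrite /pR /p2 /p4 /PP /kR /idC; nrm; hE. Qed.

Lemma vertexC : hEq (kR p4 q4) (cmp (kR p2 q2) (fmap s (pm (idm w) (alpha p0'_iso q0'_iso) : @hom KK (w, tens (tens x y) z) (w, tens x (tens y z))))).
Proof.
have PC := PC.
apply: (ff_hEq E11) => //; first exact: esym (TC T).
rewrite {1 2}/kR /idC; nrm.
hE.
apply: hEq_trans (hEq_fmap _ QC4) _.
apply: hEq_symR; rewrite /alpha (cmp_assoc (fmap m (qR _ _))); apply: hEq_cmp_idl.
  apply: (hEq_trans (hEq_invcF m (kR_iso p0'_iso q0'_iso) QC2)); exact: hEq_idm (esym (e3 _)).
hE.
Qed.

Lemma p1_iso : is_iso p1. Proof. apply: iso_cmp; [exact: kL_iso | exact: iso_idc]. Qed.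
Lemma q1_iso : is_iso q1.
Proof. apply: iso_cmp; [apply: iso_cmp; [exact: iso_idc|exact: iso_fmap] | exact: iso_idc]. Qed.
Lemma p4_iso : is_iso p4. Proof. apply: iso_cmp; [exact: kR_iso | exact: iso_idc]. Qed.
Lemma q4_iso : is_iso q4.
Proof. apply: iso_cmp; [apply: iso_cmp; [exact: iso_idc|exact: iso_fmap] | exact: iso_idc]. Qed.
Lemma p2_iso : is_iso p2.
Proof.
apply: iso_cmp; [apply: iso_cmp; [exact: iso_idc|apply: iso_fmap] | exact: iso_idc].
apply: iso_cmp; [exact: Hp0 | exact: iso_idc].
Qed.
Lemma q2_iso : is_iso q2.
Proof.
apply: iso_cmp; [apply: iso_fmap | exact: iso_idc].
apply: iso_lift; apply: iso_cmp; [apply: iso_cmp; [apply: cnt_iso | exact: iso_pm] | exact: iso_idc].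
Qed.

Lemma pent_data :
  cmp (alpha p2_iso q2_iso) (alpha p1_iso q1_iso) =
  cmp (fmap m (fmap s (pm (idm w) (alpha p0'_iso q0'_iso) : @hom KK (w, tens (tens x y) z) (w, tens x (tens y z)))))
      (cmp (alpha p4_iso q4_iso)
           (fmap m (fmap s (pm (alpha Hp0 Hq0) (idm z) : @hom KK (tens (tens w x) y, z) (tens w (tens x y), z))))).
Proof.
have VA := vertexA; have VB := vertexB; have VC := vertexC.
apply: hEqE.
pose e := etrans (e3 (CM f1 T)) (etrans (f_equal m (TB T)) (e3 (CM f2 T))).
apply: (hEq_trans (g := (cmp (fmap m (inv (kR_iso p2_iso q2_iso))) (cmp (idc e) (fmap m (kL p1 q1)))))).
  rewrite /alpha -!cmp_assoc; apply: hEq_cmp; last exact: hEq_refl.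
  apply: hEqL_idcl; apply: hEqR_idcl.
  rewrite (cmp_assoc (fmap m (kL p2 q2))); apply: hEq_cmp_idl.
    apply: (hEq_trans (hEq_invcF m (kR_iso p1_iso q1_iso) (hEq_sym VB))); exact: hEq_idm (esym (e3 _)).
  hE.
apply: hEq_symR.
rewrite /alpha -!cmp_assoc (cmp_assoc (fmap m (fmap s _))).
apply: hEq_cmp.
  apply: hEqL_idcl; apply: hEqR_idcl.
  rewrite -fmap_cmp; apply: hEq_fmap; exact: hEq_sym VA.
rewrite -fmap_cmp; apply: hEq_fmap.
exact: (hEq_inv_cmp _ _ VC).
Qed.
End Data.
End Pent.

Definition iota : DHom 0 1 := dcol 0.
Definition j1 : DHom 1 2 := dplus iota (did 1).
Definition j2 : DHom 1 2 := dplus (did 1) iota.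
Lemma dlunit1 : dlunit 1 = did 1.
Proof. apply: dhom_eq => i; apply: val_inj; by rewrite /= !ffunE. Qed.
Lemma drunit1 : drunit 1 = did 1.
Proof. apply: dhom_eq => i; apply: val_inj; by rewrite /= !ffunE. Qed.
Lemma dj1 : dcomp (dcol 2) j1 = did 1. Proof. by rewrite dcol_comp did1. Qed.
Lemma dj2 : dcomp (dcol 2) j2 = did 1. Proof. by rewrite dcol_comp did1. Qed.
Lemma dassoc101 : dassoc 1 0 1 = did 2.
Proof. apply: dhom_eq => i; apply: val_inj; by rewrite /= !ffunE. Qed.

Definition kk : DHom 2 3 := dplus j2 (did 1).
Lemma kkE : kk = dplus (did 1) j1 :> DHom 2 3. Proof. rewrite /kk /j1 /j2 /iota; dtac. Qed.
Lemma kk1 : dcomp d1 kk = did 2. Proof. rewrite /kk /j2 /iota /d1; dtac. Qed.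
Lemma kk2 : dcomp d2 kk = did 2. Proof. rewrite /kk /j2 /iota /d2; dtac. Qed.

Ltac nrm := do 3 (rewrite ?fmap_cmp ?fmap_idc ?lift_K ?cmp_fst ?cmp_snd ?pm_fst ?pm_snd ?idc_fst ?idc_snd -?cmp_assoc ?cnt_nat ?cnt_nat' ?pm_cmp ?pm_cmp' ?invF ?invF' ?cc1' ?cc2' ?cc1 ?cc2 ?ccF1 ?ccF2 ?ccF1' ?ccF2' ?cmp_id_r ?cmp_id_l).

Section Unit.
Variable H : HomotopyMonoid.
Local Notation C := (HC H).
Local Notation CM := (HCmap H).
Local Notation K := (HC H 1).
Local Notation KK := (ProdCat K K).
Local Notation xi11 := (X11 H).
Local Notation m := (CM (dcol 2)).
Variable E11 : EqvData (X11 H).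
Variable E0 : EqvData (xi0 H).
Local Notation s := (eG E11).
Local Notation tens := (tens E11).
Local Notation cn := (cnt E11).
Local Notation cni := (cnti E11).

Definition X01 : Functor (C 1) (ProdCat (C 0) K) := xi H 0 1.
Definition X10 : Functor (C 1) (ProdCat K (C 0)) := xi H 1 0.
Definition z0 : C 0 := eG E0 (tt : TermCat).
Definition e : K := CM iota z0.
Definition zeta (u : C 0) : hom z0 u := lift E0 (tt : @hom TermCat (xi0 H z0) (xi0 H u)).

Lemma C0uniq (u v : C 0) (f g : hom u v) : f = g.
Proof. apply: (ff_faithful E0); by case: (fmap _ f); case: (fmap _ g). Qed.
Lemma hEqC0 (u v u' v' : C 0) (f : hom u v) (g : hom u' v') : u = u' -> v = v' -> hEq f g.
Proof. move=> eu ev; destruct eu, ev; apply: eq_hEq; exact: C0uniq. Qed.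
Lemma zeta_iso u : is_iso (zeta u).
Proof. exists (lift E0 (tt : @hom TermCat (xi0 H u) (xi0 H z0))); split; exact: C0uniq. Qed.

Lemma L01 (y : K) : xi11 (CM j1 y) = ((CM iota (X01 y).1, CM (did 1) (X01 y).2) : KK).
Proof. exact: esym (@natO H 0 1 1 1 iota (did 1) y). Qed.
Lemma R10 (x : K) : xi11 (CM j2 x) = ((CM (did 1) (X10 x).1, CM iota (X10 x).2) : KK).
Proof. exact: esym (@natO H 1 1 0 1 (did 1) iota x). Qed.
Lemma U01 (y : K) : (X01 y).2 = y.
Proof. have := f_equal snd (@culO H 1 y); rewrite /= dlunit1 HCidO; exact. Qed.
Lemma U10 (x : K) : (X10 x).1 = x.
Proof. have := f_equal fst (@curO H 1 x); rewrite /= drunit1 HCidO; exact. Qed.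
Lemma mj1 (y : K) : m (CM j1 y) = y.
Proof. by rewrite -HCcompO dj1 HCidO. Qed.
Lemma mj2 (x : K) : m (CM j2 x) = x.
Proof. by rewrite -HCcompO dj2 HCidO. Qed.
Lemma Ey (y : K) : y = CM (did 1) (X01 y).2.
Proof. by rewrite HCidO U01. Qed.
Lemma Ex (x : K) : x = CM (did 1) (X10 x).1.
Proof. by rewrite HCidO U10. Qed.

Lemma x01g (y y' : K) (g : hom y y') : hEq (fmap X01 g).2 g.
Proof.
have := hEq_snd (@culM H 1 _ _ g); rewrite /= dlunit1 => X.
exact: hEq_trans X (HCidM g).
Qed.
Lemma x10g (x x' : K) (g : hom x x') : hEq (fmap X10 g).1 g.
Proof.
have := hEq_fst (@curM H 1 _ _ g); rewrite /= drunit1 => X.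
exact: hEq_trans X (HCidM g).
Qed.
Lemma mj1g (y y' : K) (g : hom y y') : hEq (fmap m (fmap (CM j1) g)) g.
Proof. apply: hEq_trans (hEq_sym (HCcompM _ _ g)) _; rewrite dj1; exact: HCidM. Qed.
Lemma mj2g (x x' : K) (g : hom x x') : hEq (fmap m (fmap (CM j2) g)) g.
Proof. apply: hEq_trans (hEq_sym (HCcompM _ _ g)) _; rewrite dj2; exact: HCidM. Qed.
Lemma j1sq (y y' : K) (g : hom y y') :
  cmp (fmap xi11 (fmap (CM j1) g)) (idc (esym (L01 y))) =
  cmp (idc (esym (L01 y'))) (pm (fmap (CM iota) (fmap X01 g).1) (fmap (CM (did 1)) (fmap X01 g).2)).
Proof. exact: (hEq_sq2 (hEq_sym (@natM H 0 1 1 1 iota (did 1) _ _ g))). Qed.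
Lemma j2sq (x x' : K) (g : hom x x') :
  cmp (fmap xi11 (fmap (CM j2) g)) (idc (esym (R10 x))) =
  cmp (idc (esym (R10 x'))) (pm (fmap (CM (did 1)) (fmap X10 g).1) (fmap (CM iota) (fmap X10 g).2)).
Proof. exact: (hEq_sq2 (hEq_sym (@natM H 1 1 0 1 (did 1) iota _ _ g))). Qed.

Definition lam (y : K) : hom (s ((e, y) : KK)) (CM j1 y) :=
  lift E11 (cmp (idc (esym (L01 y))) (cmp (pm (fmap (CM iota) (zeta (X01 y).1)) (idc (Ey y))) (cn ((e, y) : KK)))).
Definition rho (x : K) : hom (s ((x, e) : KK)) (CM j2 x) :=
  lift E11 (cmp (idc (esym (R10 x))) (cmp (pm (idc (Ex x)) (fmap (CM iota) (zeta (X10 x).2))) (cn ((x, e) : KK)))).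
Definition lu (y : K) : hom (tens e y) y := cmp (idc (mj1 y)) (fmap m (lam y)).
Definition ru (x : K) : hom (tens x e) x := cmp (idc (mj2 x)) (fmap m (rho x)).

Lemma lam_iso y : is_iso (lam y).
Proof.
apply: iso_lift; apply: iso_cmp; [apply: iso_cmp; [apply: cnt_iso | apply: iso_pm] | exact: iso_idc].
  apply: iso_fmap; exact: zeta_iso.
exact: iso_idc.
Qed.
Lemma rho_iso x : is_iso (rho x).
Proof.
apply: iso_lift; apply: iso_cmp; [apply: iso_cmp; [apply: cnt_iso | apply: iso_pm] | exact: iso_idc].
  exact: iso_idc.
apply: iso_fmap; exact: zeta_iso.
Qed.
Lemma lu_iso y : is_iso (lu y).
Proof. apply: iso_cmp; [apply: iso_fmap; exact: lam_iso | exact: iso_idc]. Qed.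
Lemma ru_iso x : is_iso (ru x).
Proof. apply: iso_cmp; [apply: iso_fmap; exact: rho_iso | exact: iso_idc]. Qed.

Lemma lam_nat (y y' : K) (f : hom y y') :
  cmp (lam y') (fmap s (pm (idm e) f : @hom KK (e, y) (e, y'))) = cmp (fmap (CM j1) f) (lam y).
Proof.
apply: (ff_faithful E11); rewrite !fmap_cmp /lam !lift_K.
rewrite -!cmp_assoc cnt_nat !cmp_assoc; congr (cmp _ _).
rewrite j1sq -!cmp_assoc; congr (cmp _ _).
rewrite !pm_cmp; congr pm.
  rewrite cmp_id_r -fmap_cmp; congr (fmap _ _); exact: C0uniq.
apply: hEqE; hE.
exact: hEq_sym (x01g f).
Qed.


Lemma rho_nat (x x' : K) (f : hom x x') :
  cmp (rho x') (fmap s (pm f (idm e) : @hom KK (x, e) (x', e))) = cmp (fmap (CM j2) f) (rho x).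
Proof.
apply: (ff_faithful E11); rewrite !fmap_cmp /rho !lift_K.
rewrite -!cmp_assoc cnt_nat !cmp_assoc; congr (cmp _ _).
rewrite j2sq -!cmp_assoc; congr (cmp _ _).
rewrite !pm_cmp; congr pm.
  apply: hEqE; hE.
  exact: hEq_sym (x10g f).
rewrite cmp_id_r -fmap_cmp; congr (fmap _ _); exact: C0uniq.
Qed.

Lemma xj2g1 (x x' : K) (g : hom x x') : hEq (fmap xi11 (fmap (CM j2) g)).1 g.
Proof.
apply: hEq_trans (hEq_fst (hEq_sym (@natM H 1 1 0 1 (did 1) iota _ _ g))) _ => /=.
apply: hEq_trans (HCidM _) _; exact: x10g.
Qed.
Lemma xj1g2 (y y' : K) (g : hom y y') : hEq (fmap xi11 (fmap (CM j1) g)).2 g.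
Proof.
apply: hEq_trans (hEq_snd (hEq_sym (@natM H 0 1 1 1 iota (did 1) _ _ g))) _ => /=.
apply: hEq_trans (HCidM _) _; exact: x01g.
Qed.

Ltac hE_hook ::= lazymatch goal with
 | |- @hEq (HC _ 0) _ _ _ _ _ _ => apply: hEqC0; try done
 | |- hEq _ (fmap X01 _).2 => apply: hEq_symR; apply: hEq_trans (x01g _) _; apply: hEq_symR
 | |- hEq (fmap xi11 (fmap (CM j2) _)).1 _ => apply: hEq_trans (xj2g1 _) _
 | |- hEq (fmap xi11 (fmap (CM j1) _)).2 _ => apply: hEq_trans (xj1g2 _) _
 | |- hEq (fmap m (fmap (CM j1) _)) _ => apply: hEq_trans (mj1g _) _
 | |- hEq (fmap m (fmap (CM j2) _)) _ => apply: hEq_trans (mj2g _) _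
 | |- hEq _ (fmap m (fmap (CM j1) _)) => apply: hEq_symR; apply: hEq_trans (mj1g _) _; apply: hEq_symR
 | |- hEq _ (fmap m (fmap (CM j2) _)) => apply: hEq_symR; apply: hEq_trans (mj2g _) _; apply: hEq_symR
 end.

Lemma lu_nat (y y' : K) (f : hom y y') :
  cmp (lu y') (fmap m (fmap s (pm (idm e) f : @hom KK (e, y) (e, y')))) = cmp f (lu y).
Proof. rewrite /lu -cmp_assoc -fmap_cmp lam_nat fmap_cmp; apply: hEqE; hE. Qed.

Lemma ru_nat (x x' : K) (f : hom x x') :
  cmp (ru x') (fmap m (fmap s (pm f (idm e) : @hom KK (x, e) (x', e)))) = cmp f (ru x).
Proof. rewrite /ru -cmp_assoc -fmap_cmp rho_nat fmap_cmp; apply: hEqE; hE. Qed.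

Section Tri.
Variables (x y : K).
Let u := s ((x, y) : KK).
Let t := CM kk u.
Lemma OT21 : X21 H t = ((CM j2 (xi11 u).1, CM (did 1) (xi11 u).2) : ProdCat (C 2) K).
Proof. exact: esym (@natO H 1 2 1 1 j2 (did 1) u). Qed.
Lemma OT12 : X12 H t = ((CM (did 1) (xi11 u).1, CM j1 (xi11 u).2) : ProdCat K (C 2)).
Proof. rewrite /t kkE; exact: esym (@natO H 1 1 1 2 (did 1) j1 u). Qed.
Lemma MT1 : Md1 H t = u.
Proof. by rewrite /Md1 /t -HCcompO kk1 HCidO. Qed.
Lemma MT2 : Md2 H t = u.
Proof. by rewrite /Md2 /t -HCcompO kk2 HCidO. Qed.

Definition pT : hom (s ((x, e) : KK)) (X21 H t).1 :=
  cmp (idc (esym (f_equal fst OT21))) (cmp (fmap (CM j2) (cni ((x, y) : KK)).1) (rho x)).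
Definition qT : hom y (X21 H t).2 :=
  cmp (idc (esym (f_equal snd OT21))) (cmp (fmap (CM (did 1)) (cni ((x, y) : KK)).2) (idC y)).
Lemma pT_iso : is_iso pT.
Proof.
apply: iso_cmp; [apply: iso_cmp; [exact: rho_iso | apply: iso_fmap; exact: (iso_fst (cnti_iso _ _))] | exact: iso_idc].
Qed.
Lemma qT_iso : is_iso qT.
Proof.
apply: iso_cmp; [apply: iso_cmp; [exact: iso_idc | apply: iso_fmap; exact: (iso_snd (cnti_iso _ _))] | exact: iso_idc].
Qed.

Lemma TL : hEq (kL pT qT) (fmap s (pm (ru x) (idm y) : @hom KK (tens x e, y) (x, y))).
Proof.
apply: (ff_hEq E11) => //; first exact: MT1.
rewrite xsF /kL /pT /qT /ru /idC; nrm.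
apply: hEqL_idcl; rewrite !cmp_assoc; apply: hEq_cmp; first exact: hEq_refl.
apply: hEq_pair; rewrite ?cmp_fst ?cmp_snd ?pm_fst ?pm_snd; nrm; hE.
Qed.

Lemma QT : hEq (qR pT qT) (cmp (fmap (CM j1) (cni ((x, y) : KK)).2) (lam y)).
Proof.
apply: (ff_hEq E11) => //; first by rewrite OT12.
rewrite /qR /pT /qT /lam /rho /idC !lift_K !fmap_cmp !lift_K.
rewrite (cmp_assoc (fmap xi11 (fmap (CM j2) _))) j2sq.
rewrite (cmp_assoc (fmap xi11 (fmap (CM j1) _))) j1sq.
nrm.
rewrite -!(@fmap_cmp _ _ (CM iota)).
hE.
move: (@coO H 1 0 1 u); rewrite dassoc101 HCidO => -[E _].
by rewrite E.
Qed.

Lemma TR : hEq (kR pT qT) (fmap s (pm (idm x) (lu y) : @hom KK (x, tens e y) (x, y))).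
Proof.
apply: (ff_hEq E11) => //; first exact: MT2.
have Q := QT.
rewrite xsF /kR; set QQQ := qR pT qT.
rewrite /pR /pT /lu /idC; nrm.
apply: hEqL_idcl; rewrite !cmp_assoc; apply: hEq_cmp; first exact: hEq_refl.
apply: hEq_pair; rewrite ?cmp_fst ?cmp_snd ?pm_fst ?pm_snd.
  nrm; hE.
apply: hEq_trans (hEq_fmap m Q) _.
nrm; hE.
Qed.

Lemma tri_data : cmp (fmap m (fmap s (pm (idm x) (lu y) : @hom KK (x, tens e y) (x, y)))) (alpha pT_iso qT_iso)
  = fmap m (fmap s (pm (ru x) (idm y) : @hom KK (tens x e, y) (x, y))).
Proof.
have L := TL; have R := TR.
apply: hEqE; rewrite /alpha (cmp_assoc (fmap m (fmap s _))).
apply: hEq_cmp_idl.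
  apply: (hEq_trans (hEq_invcF m (kR_iso pT_iso qT_iso) (hEq_sym R))); exact: hEq_idm (f_equal m MT2).
apply: hEqL_idcl; exact: hEq_fmap _ L.
Qed.
End Tri.
End Unit.

Section Final.
Variable H : HomotopyMonoid.
Local Notation C := (HC H).
Local Notation CM := (HCmap H).
Local Notation K := (HC H 1).
Local Notation KK := (ProdCat K K).
Local Notation m := (CM (dcol 2)).
Variable E11 : EqvData (X11 H).
Variable E21 : EqvData (X21 H).
Variable E31 : EqvData (X31 H).
Variable E0 : EqvData (xi0 H).
Local Notation s := (eG E11).
Local Notation tens := (tens E11).

Definition tC (a b c : K) : C 3 := eG E21 ((s ((a, b) : KK), c) : ProdCat (C 2) K).
Definition pC (a b c : K) : hom (s ((a, b) : KK)) (X21 H (tC a b c)).1 :=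
  (cnti E21 ((s ((a, b) : KK), c) : ProdCat (C 2) K)).1.
Definition qC (a b c : K) : hom c (X21 H (tC a b c)).2 :=
  (cnti E21 ((s ((a, b) : KK), c) : ProdCat (C 2) K)).2.
Lemma pC_iso a b c : is_iso (pC a b c). Proof. exact: (iso_fst (cnti_iso _ _)). Qed.
Lemma qC_iso a b c : is_iso (qC a b c). Proof. exact: (iso_snd (cnti_iso _ _)). Qed.
Definition aC (a b c : K) : hom (tens (tens a b) c) (tens a (tens b c)) := alpha (pC_iso a b c) (qC_iso a b c).

Lemma aC_nat (a b c a' b' c' : K) (f : hom a a') (g : hom b b') (h : hom c c') :
  cmp (aC a' b' c') (fmap m (fmap s (pm (fmap m (fmap s (pm f g : @hom KK (a, b) (a', b')))) h : @hom KK (tens a b, c) (tens a' b', c'))))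
  = cmp (fmap m (fmap s (pm f (fmap m (fmap s (pm g h : @hom KK (b, c) (b', c')))) : @hom KK (a, tens b c) (a', tens b' c')))) (aC a b c).
Proof.
apply: alpha_nat.
- have := f_equal fst (cnti_nat E21 (pm (fmap s (pm f g : @hom KK (a, b) (a', b'))) h : @hom (ProdCat (C 2) K) (s ((a, b) : KK), c) (s ((a', b') : KK), c'))).
  by rewrite /pC /= => ->.
- have := f_equal snd (cnti_nat E21 (pm (fmap s (pm f g : @hom KK (a, b) (a', b'))) h : @hom (ProdCat (C 2) K) (s ((a, b) : KK), c) (s ((a', b') : KK), c'))).
  by rewrite /qC /= => ->.
Qed.


Lemma aC_iso a b c : is_iso (aC a b c).
Proof.
apply: iso_cmp; [apply: iso_cmp; [apply: iso_fmap; exact: (kL_iso (pC_iso a b c) (qC_iso a b c)) | exact: iso_idc] | apply: iso_fmap; exact: iso_inv].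
Qed.

Lemma pentC (w x y z : K) :
  cmp (aC w x (tens y z)) (aC (tens w x) y z) =
  cmp (fmap m (fmap s (pm (idm w) (aC x y z) : @hom KK (w, tens (tens x y) z) (w, tens x (tens y z)))))
      (cmp (aC w (tens x y) z) (fmap m (fmap s (pm (aC w x y) (idm z) : @hom KK (tens (tens w x) y, z) (tens w (tens x y), z))))).
Proof.
pose tt0 := tC w x y.
pose T := eG E31 ((tt0, z) : ProdCat (C 3) K).
pose psi := cnti E31 ((tt0, z) : ProdCat (C 3) K).
have Hpsi : is_iso psi := cnti_iso E31 _.
pose p0 := cmp (fmap (X21 H) psi.1).1 (pC w x y).
pose q0 := cmp (fmap (X21 H) psi.1).2 (qC w x y).
pose Z := psi.2.
have Hp0 : is_iso p0.
  apply: iso_cmp; [exact: pC_iso | exact: (iso_fst (iso_fmap _ (iso_fst Hpsi)))].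
have Hq0 : is_iso q0.
  apply: iso_cmp; [exact: qC_iso | exact: (iso_snd (iso_fmap _ (iso_fst Hpsi)))].
have HZ : is_iso Z := iso_snd Hpsi.
have P := pent_data Hp0 Hq0 HZ.
rewrite /aC (alpha_indep E21 (pC_iso w x (tens y z)) (qC_iso w x (tens y z)) (p2_iso Hp0) (q2_iso E11 Hq0 HZ)).
rewrite (alpha_indep E21 (pC_iso (tens w x) y z) (qC_iso (tens w x) y z) (p1_iso Hp0 Hq0) (q1_iso HZ)).
rewrite (alpha_indep E21 (pC_iso x y z) (qC_iso x y z) (p0'_iso Hp0 Hq0) (q0'_iso HZ)).
rewrite (alpha_indep E21 (pC_iso w (tens x y) z) (qC_iso w (tens x y) z) (p4_iso Hp0 Hq0) (q4_iso HZ)).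
rewrite (alpha_indep E21 (pC_iso w x y) (qC_iso w x y) Hp0 Hq0).
exact: P.
Qed.

Lemma triC (x y : K) :
  cmp (fmap m (fmap s (pm (idm x) (lu E11 E0 y) : @hom KK (x, tens (e E0) y) (x, y)))) (aC x (e E0) y)
  = fmap m (fmap s (pm (ru E11 E0 x) (idm y) : @hom KK (tens x (e E0), y) (x, y))).
Proof.
rewrite /aC (alpha_indep E21 (pC_iso x (e E0) y) (qC_iso x (e E0) y) (pT_iso E11 E0 x y) (qT_iso E11 x y)).
exact: tri_data.
Qed.

Definition tensorF : Functor KK K := FComp m s.

Definition assocNT : NatTrans (AssocSrc tensorF) (AssocTgt tensorF).
Proof.
refine (@Build_NatTrans _ _ (AssocSrc tensorF) (AssocTgt tensorF) (fun abc => match abc as abc0 return hom (AssocSrc tensorF abc0) (AssocTgt tensorF abc0) with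
                              ((a, b), c) => aC a b c end) _).
move=> [[a b] c] [[a' b'] c'] [[f g] h].
exact: (esym (aC_nat f g h)).
Defined.

Definition lunitNT : NatTrans (LUnitSrc tensorF (e E0)) (FId K).
Proof.
refine (@Build_NatTrans K K (LUnitSrc tensorF (e E0)) (FId K) (fun a => lu E11 E0 a) _).
move=> a b f; exact: (esym (lu_nat E11 E0 f)).
Defined.

Definition runitNT : NatTrans (RUnitSrc tensorF (e E0)) (FId K).
Proof.
refine (@Build_NatTrans K K (RUnitSrc tensorF (e E0)) (FId K) (fun a => ru E11 E0 a) _).
move=> a b f; exact: (esym (ru_nat E11 E0 f)).
Defined.

Definition MS : MonoidalStructure K.
Proof.
refine {| tensor := tensorF; munit := e E0; assoc := assocNT; lunit := lunitNT; runit := runitNT |}.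
- by move=> [[a b] c]; exact: aC_iso.
- move=> a; exact: lu_iso.
- move=> a; exact: ru_iso.
- move=> w x y z; exact: pentC.
- move=> x y; exact: triC.
Defined.
End Final.

Theorem proposition3p3p1 (H : HomotopyMonoid) :
  inhabited (MonoidalStructure (HC H 1)).
Proof.
case: (eqv_data (xi_equiv H 1 1)) => E11.
case: (eqv_data (xi_equiv H 2 1)) => E21.
case: (eqv_data (xi_equiv H 3 1)) => E31.
case: (eqv_data (xi0_equiv H)) => E0.
constructor; exact: (@MS H (E11 : EqvData (X11 H)) (E21 : EqvData (X21 H)) (E31 : EqvData (X31 H)) E0).
Qed.
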